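(* Let $?:[0,1]\to[0,1]$ be the Minkowski question mark function and let $k\in\mathbb{N}_0=\{0,1,2,\dots\}$. Suppose that $\int_0^1\cos(2\pi n x)\,d?(x)\to 0$ as $n\to\infty$ ($n\in\mathbb{N}$). Then $$\int_0^1 (ix)^k e^{itx}\,d?(x)=o(1)\quad\text{as } |t|\to\infty.$$
   Context: The Minkowski question mark function is defined on $[0,1]$ by $?(0)=0$, $?(1)=1$ and, for $x=[0;a_1,a_2,a_3,\dots]$ written as a regular continued fraction (finite for rational $x$, in which case the sum is finite), $?(x)=2\sum_{i\ge1}(-1)^{i+1}2^{-(a_1+\cdots+a_i)}$. It is continuous, strictly increasing and singular. The hypothesis is an affirmative answer to Salem's question whether the Fourier–Stieltjes coefficients $d_n=\int_0^1\cos(2\pi nx)\,d?(x)$ tend to zero (note $\int_0^1\sin(2\pi nx)\,d?(x)=0$ for all $n$). *)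

(* Defs.v *)
From Stdlib Require Import Reals ZArith.
From Coquelicot Require Import Coquelicot.
Open Scope R_scope.

(* Gauss map: x |-> 1/x - floor(1/x) (and 0 |-> 0, the expansion has ended). *)
Definition gauss_map (x : R) : R :=
  if Req_EM_T x 0 then 0 else / x - IZR (Int_part (/ x)).

Fixpoint cf_rem (x : R) (i : nat) : R :=
  match i with
  | O => x
  | S j => gauss_map (cf_rem x j)
  end.

(* a_{i+1}(x) = floor(1/x_i) if x_i <> 0; 0 once the expansion terminated. *)
Definition cf_digit (x : R) (i : nat) : nat :=
  let y := cf_rem x i in
  if Req_EM_T y 0 then 0%nat else Z.to_nat (Int_part (/ y)).

Fixpoint cf_digit_sum (x : R) (i : nat) : nat :=
  match i with
  | O => cf_digit x 0
  | S j => (cf_digit_sum x j + cf_digit x (S j))%nat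
  end.

(* The (i+1)-th term 2 (-1)^{(i+1)+1} 2^{-(a_1+...+a_{i+1})}, or 0 when
   the (finite) expansion has no (i+1)-th partial quotient. *)
Definition minkowski_term (x : R) (i : nat) : R :=
  if Req_EM_T (cf_rem x i) 0 then 0
  else 2 * (-1) ^ i * (/ 2) ^ (cf_digit_sum x i).

(** Minkowski question mark function ?(x) = 2 sum_{i>=1} (-1)^{i+1} 2^{-(a_1+..+a_i)}
    (relevant on [0,1]; gives ?(0) = 0 and ?(1) = 1). *)
Definition minkowski (x : R) : R := Series (minkowski_term x).

Definition is_RS_integral {V : NormedModule R_AbsRing}
  (f : R -> V) (g : R -> R) (a b : R) (I : V) : Prop :=
  forall eps : posreal, exists delta : posreal,
    forall (n : nat) (p xi : nat -> R),
      p O = a -> p n = b ->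
      (forall i, (i < n)%nat ->
         p i <= xi i <= p (S i) /\ p (S i) - p i < delta) ->
      norm (minus (sum_n (fun i => scal (g (p (S i)) - g (p i)) (f (xi i)))
                         (pred n)) I) < eps.

Definition cis (theta : R) : C := (RtoC (cos theta) + Ci * RtoC (sin theta))%C.

(* Main.v *)
Require Import Defs.
From Stdlib Require Import Reals Lra Lia ZArith ClassicalEpsilon FunctionalExtensionality.
From Coquelicot Require Import Coquelicot.
Open Scope R_scope.

Fixpoint rsum (n : nat) (u : nat -> R) : R :=
  match n with O => 0 | S m => rsum m u + u m end.

Lemma rsum_ext n u v : (forall i, (i < n)%nat -> u i = v i) -> rsum n u = rsum n v.
Proof. induction n; simpl; intros H; auto. rewrite IHn by (intros; apply H; lia). rewrite H by lia; auto. Qed.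

Lemma rsum_le n u v : (forall i, (i < n)%nat -> u i <= v i) -> rsum n u <= rsum n v.
Proof. induction n; simpl; intros H; [lra|]. assert (rsum n u <= rsum n v) by (apply IHn; intros; apply H; lia).
 assert (u n <= v n) by (apply H; lia). lra. Qed.

Lemma rsum_plus n u v : rsum n (fun i => u i + v i) = rsum n u + rsum n v.
Proof. induction n; simpl; [lra|]. rewrite IHn; ring. Qed.

Lemma rsum_minus n u v : rsum n (fun i => u i - v i) = rsum n u - rsum n v.
Proof. induction n; simpl; [lra|]. rewrite IHn; ring. Qed.

Lemma rsum_scal n c u : rsum n (fun i => c * u i) = c * rsum n u.
Proof. induction n; simpl; [lra|]. rewrite IHn; ring. Qed.

Lemma rsum_const n c : rsum n (fun _ => c) = INR n * c.
Proof. induction n; simpl rsum; [simpl; lra|]. rewrite IHn, S_INR; ring. Qed.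

Lemma rsum_abs n u : Rabs (rsum n u) <= rsum n (fun i => Rabs (u i)).
Proof. induction n; simpl. rewrite Rabs_R0; lra.
 eapply Rle_trans; [apply Rabs_triang|]. lra. Qed.

Lemma rsum_nonneg n u : (forall i, (i < n)%nat -> 0 <= u i) -> 0 <= rsum n u.
Proof. intros H. replace 0 with (rsum n (fun _ => 0)). apply rsum_le; auto.
 rewrite rsum_const; ring. Qed.

Lemma rsum_swap n m (u : nat -> nat -> R) :
  rsum n (fun i => rsum m (fun j => u i j)) = rsum m (fun j => rsum n (fun i => u i j)).
Proof. induction n; simpl. rewrite rsum_const; simpl; ring.
 rewrite IHn, <- rsum_plus. reflexivity. Qed.

Lemma rsum_telescope n (h : nat -> R) : rsum n (fun i => h (S i) - h i) = h n - h O.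
Proof. induction n; simpl; [ring|]. rewrite IHn; ring. Qed.

Lemma rsum_sum_n n u : sum_n u n = rsum (S n) u.
Proof. induction n. rewrite sum_O. simpl. rewrite Rplus_0_l. reflexivity.
 rewrite sum_Sn, IHn. reflexivity. Qed.

Lemma rsum_shift n u : rsum (S n) u = u O + rsum n (fun i => u (S i)).
Proof. induction n. simpl; ring. simpl rsum in *. rewrite IHn. ring. Qed.

Lemma rsum_rev n u : rsum n u = rsum n (fun i => u (n - 1 - i)%nat).
Proof. induction n. reflexivity.
 transitivity (rsum n u + u n); [reflexivity|].
 rewrite (rsum_shift n (fun i => u (S n - 1 - i)%nat)). rewrite IHn.
 replace (S n - 1 - 0)%nat with n by lia. rewrite Rplus_comm. f_equal.
 apply rsum_ext; intros. f_equal. lia. Qed.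

Lemma rsum_scal_r n c u : rsum n (fun i => u i * c) = rsum n u * c.
Proof. induction n; simpl; [lra|]. rewrite IHn; ring. Qed.

Lemma rsum_opp n u : rsum n (fun i => - u i) = - rsum n u.
Proof. induction n; simpl; [lra|]. rewrite IHn; ring. Qed.
Definition mono (g : R -> R) := forall x y, 0 <= x -> x <= y -> y <= 1 -> g x <= g y.
Definition part n (p xi : nat -> R) d := p O = 0 /\ p n = 1 /\
  forall i, (i < n)%nat -> (p i <= xi i <= p (S i)) /\ p (S i) - p i <= d.
Definition RS g f n (p xi : nat -> R) := rsum n (fun i => (g (p (S i)) - g (p i)) * f (xi i)).
Definition lip (f : R -> R) L := forall x y, 0 <= x <= 1 -> 0 <= y <= 1 ->
  Rabs (f x - f y) <= L * Rabs (x - y).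

Lemma part_chain n p xi d : part n p xi d -> forall i j, (i <= j <= n)%nat -> p i <= p j.
Proof. intros [P0 [P1 P2]] i j. induction j; intros Hj.
 assert (i = 0)%nat by lia. subst; lra.
 destruct (Nat.eq_dec i (S j)). subst; lra.
 assert (p i <= p j) by (apply IHj; lia). destruct (P2 j) as [[? ?] ?]; lia || lra. Qed.

Lemma part_range n p xi d : part n p xi d -> forall i, (i <= n)%nat -> 0 <= p i <= 1.
Proof. intros H i Hi. pose proof (part_chain _ _ _ _ H) as CH. destruct H as [P0 [P1 P2]].
 split. rewrite <- P0. apply CH; lia. rewrite <- P1. apply CH; lia. Qed.

Lemma part_tag n p xi d : part n p xi d -> forall i, (i < n)%nat -> 0 <= xi i <= 1.
Proof. intros H i Hi. pose proof (part_range _ _ _ _ H i ltac:(lia)).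
 pose proof (part_range _ _ _ _ H (S i) ltac:(lia)).
 destruct H as [P0 [P1 P2]]. destruct (P2 i Hi) as [[? ?] ?]. lra. Qed.

Lemma clamp_eq a b c d : a <= b -> c <= d ->
  Rmax 0 (Rmin b d - Rmax a c) = Rmin b (Rmax a d) - Rmin b (Rmax a c).
Proof. intros. unfold Rmax, Rmin.
 repeat (destruct Rle_dec); lra. Qed.

Lemma ov_sum a b m (c : nat -> R) : a <= b -> (forall j, (j < m)%nat -> c j <= c (S j)) ->
  c O <= a -> b <= c m ->
  rsum m (fun j => Rmax 0 (Rmin b (c (S j)) - Rmax a (c j))) = b - a.
Proof. intros Hab Hc H0 Hm.
 rewrite (rsum_ext _ _ (fun j => Rmin b (Rmax a (c (S j))) - Rmin b (Rmax a (c j)))).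
 rewrite (rsum_telescope m (fun j => Rmin b (Rmax a (c j)))).
 unfold Rmax, Rmin; repeat destruct Rle_dec; lra.
 intros; apply clamp_eq; auto. Qed.

Lemma RS_diff g f L n p xi d1 m q eta d2 : mono g -> lip f L -> 0 <= L ->
  part n p xi d1 -> part m q eta d2 ->
  Rabs (RS g f n p xi - RS g f m q eta) <= L * (d1 + d2) * (g 1 - g 0).
Proof.
 intros Hg Hf HL HP HQ.
 pose proof (part_chain _ _ _ _ HP) as CP. pose proof (part_chain _ _ _ _ HQ) as CQ.
 pose proof (part_range _ _ _ _ HP) as RP. pose proof (part_range _ _ _ _ HQ) as RQ.
 pose proof (part_tag _ _ _ _ HP) as TP. pose proof (part_tag _ _ _ _ HQ) as TQ.
 set (w := fun i j => Rmax 0 (Rmin (g (p (S i))) (g (q (S j))) - Rmax (g (p i)) (g (q j)))).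
 assert (Hw0 : forall i j, 0 <= w i j) by (intros; unfold w; apply Rmax_l).
 assert (Hrow : forall i, (i < n)%nat -> rsum m (fun j => w i j) = g (p (S i)) - g (p i)).
 { intros i Hi. unfold w. apply (ov_sum _ _ m (fun j => g (q j))).
   - apply Hg; try apply RP; try lia. apply CP; lia.
   - intros j Hj. apply Hg; try apply RQ; try lia. apply CQ; lia.
   - destruct HQ as [-> _]. apply Hg; try lra; apply RP; lia.
   - destruct HQ as [_ [-> _]]. apply Hg; try lra; apply RP; lia. }
 assert (Hcol : forall j, (j < m)%nat -> rsum n (fun i => w i j) = g (q (S j)) - g (q j)).
 { intros j Hj. unfold w.
   rewrite (rsum_ext _ _ (fun i => Rmax 0 (Rmin (g (q (S j))) (g (p (S i))) - Rmax (g (q j)) (g (p i))))).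
   2:{ intros i0 Hi0; rewrite Rmin_comm, (Rmax_comm (g (p i0))); reflexivity. }
   apply (ov_sum _ _ n (fun i => g (p i))).
   - apply Hg; try apply RQ; try lia. apply CQ; lia.
   - intros i Hi. apply Hg; try apply RP; try lia. apply CP; lia.
   - destruct HP as [-> _]. apply Hg; try lra; apply RQ; lia.
   - destruct HP as [_ [-> _]]. apply Hg; try lra; apply RQ; lia. }
 assert (E1 : RS g f n p xi = rsum n (fun i => rsum m (fun j => w i j * f (xi i)))).
 { unfold RS. apply rsum_ext. intros i Hi.
   rewrite (rsum_ext _ _ (fun j => f (xi i) * w i j)) by (intros; ring).
   rewrite rsum_scal, Hrow by auto. ring. }
 assert (E2 : RS g f m q eta = rsum n (fun i => rsum m (fun j => w i j * f (eta j)))).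
 { rewrite rsum_swap. unfold RS. apply rsum_ext. intros j Hj.
   rewrite (rsum_ext _ _ (fun i => f (eta j) * w i j)) by (intros; ring).
   rewrite rsum_scal, Hcol by auto. ring. }
 rewrite E1, E2, <- rsum_minus.
 eapply Rle_trans; [apply rsum_abs|].
 apply Rle_trans with (rsum n (fun i => (L * (d1 + d2)) * rsum m (fun j => w i j))).
 - apply rsum_le. intros i Hi. rewrite <- rsum_minus.
   eapply Rle_trans; [apply rsum_abs|]. rewrite <- rsum_scal. apply rsum_le. intros j Hj.
   replace (w i j * f (xi i) - w i j * f (eta j)) with (w i j * (f (xi i) - f (eta j))) by ring.
   rewrite Rabs_mult, (Rabs_pos_eq (w i j)) by auto.
   destruct (Req_dec (w i j) 0) as [E|E]. rewrite E; lra.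
   assert (Hpos : 0 < w i j) by (pose proof (Hw0 i j); lra).
   assert (A1 : g (q j) < g (p (S i)) /\ g (p i) < g (q (S j))).
   { unfold w in Hpos. unfold Rmax at 1 in Hpos. destruct Rle_dec. 2: lra.
     unfold Rmin, Rmax in *. repeat destruct Rle_dec; lra. }
   assert (A2 : q j < p (S i)).
   { destruct (Rlt_dec (q j) (p (S i))) as [?|N]; auto. exfalso.
     assert (g (p (S i)) <= g (q j)) by (apply Hg; try apply RP; try apply RQ; lia || lra). lra. }
   assert (A3 : p i < q (S j)).
   { destruct (Rlt_dec (p i) (q (S j))) as [?|N]; auto. exfalso.
     assert (g (q (S j)) <= g (p i)) by (apply Hg; try apply RP; try apply RQ; lia || lra). lra. }
   destruct HP as [_ [_ HP]]. destruct HQ as [_ [_ HQ]].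
   destruct (HP i Hi) as [[? ?] ?]. destruct (HQ j Hj) as [[? ?] ?].
   rewrite (Rmult_comm (L * (d1 + d2))). apply Rmult_le_compat_l; [lra|].
   eapply Rle_trans. apply Hf. apply TP; auto. apply TQ; auto.
   apply Rmult_le_compat_l. lra.
   unfold Rabs; destruct Rcase_abs; lra.
 - rewrite rsum_scal. rewrite (rsum_ext _ _ (fun i => g (p (S i)) - g (p i))) by auto.
   rewrite (rsum_telescope n (fun i => g (p i))).
   destruct HP as [-> [-> _]]. lra.
Qed.

Definition up (N i : nat) := INR i / INR N.
Definition Lam g (N : nat) f := RS g f N (up N) (up N).
Definition LamR g (N : nat) f := RS g f N (up N) (fun i => up N (S i)).

Lemma part_unif N : (1 <= N)%nat -> part N (up N) (up N) (/ INR N).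
Proof. intros HN. assert (0 < INR N) by (apply lt_0_INR; lia). unfold part, up. split; [|split].
 - unfold Rdiv; rewrite Rmult_0_l; auto.
 - field; lra.
 - intros i Hi. rewrite S_INR. split; [split|].
   + lra.
   + apply Rmult_le_compat_r. left; apply Rinv_0_lt_compat; lra. lra.
   + right. field. lra. Qed.

Lemma part_unifR N : (1 <= N)%nat -> part N (up N) (fun i => up N (S i)) (/ INR N).
Proof. intros HN. assert (0 < INR N) by (apply lt_0_INR; lia). unfold part, up. split; [|split].
 - unfold Rdiv; rewrite Rmult_0_l; auto.
 - field; lra.
 - intros i Hi. rewrite S_INR. split; [split|].
   + apply Rmult_le_compat_r. left; apply Rinv_0_lt_compat; lra. lra.
   + lra.
   + right. field. lra. Qed.

Lemma RS_def_iff (f g : R -> R) I :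
  is_RS_integral (V := R_NormedModule) f g 0 1 I ->
  forall eps : posreal, exists delta : posreal, forall n p xi, part n p xi (delta / 2) ->
    Rabs (RS g f n p xi - I) < eps.
Proof. intros H eps. destruct (H eps) as [delta Hd]. exists delta.
 intros n p xi [P0 [P1 P2]]. destruct n. exfalso. rewrite P0 in P1. lra.
 specialize (Hd (S n) p xi P0 P1).
 replace (RS g f (S n) p xi) with (sum_n (fun i => scal (g (p (S i)) - g (p i)) (f (xi i))) (pred (S n))).
 apply Hd. intros i Hi. destruct (P2 i Hi). split; auto. pose proof (cond_pos delta). lra.
 simpl pred. rewrite rsum_sum_n. reflexivity. Qed.

Lemma le_eps a b : (forall eps, 0 < eps -> a <= b + eps) -> a <= b.
Proof. intros H. destruct (Rle_dec a b); auto. exfalso.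
 specialize (H ((a - b)/2) ltac:(lra)). lra. Qed.

Lemma le_eps2 a b : (forall eps, 0 < eps -> a <= b + 2 * eps) -> a <= b.
Proof. intros H. apply le_eps. intros eps Heps. specialize (H (eps/2) ltac:(lra)). lra. Qed.

Lemma CL g f L I N : mono g -> lip f L -> 0 <= L -> (1 <= N)%nat ->
  is_RS_integral (V := R_NormedModule) f g 0 1 I ->
  Rabs (Lam g N f - I) <= L * / INR N * (g 1 - g 0).
Proof. intros Hg Hf HL HN HI.
 assert (HV : 0 <= g 1 - g 0) by (pose proof (Hg 0 1); lra).
 apply le_eps2. intros eps Heps.
 destruct (RS_def_iff _ _ _ HI (mkposreal _ Heps)) as [delta Hd].
 assert (Hr : 0 < Rmin (delta/2) (eps / (L * (g 1 - g 0) + 1))).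
 { apply Rmin_pos. pose proof (cond_pos delta); lra. apply Rdiv_lt_0_compat. lra.
   pose proof (Rmult_le_pos _ _ HL HV). lra. }
 destruct (archimed_cor1 _ Hr) as [M [HM1 HM2]].
 assert (HMd : / INR M <= delta / 2) by (pose proof (Rmin_l (delta/2) (eps / (L * (g 1 - g 0) + 1))); lra).
 assert (HMe : L * / INR M * (g 1 - g 0) <= eps).
 { pose proof (Rmin_r (delta/2) (eps / (L * (g 1 - g 0) + 1))).
   assert (0 < / INR M) by (apply Rinv_0_lt_compat, lt_0_INR; lia).
   assert (/ INR M * (L * (g 1 - g 0) + 1) <= eps).
   { apply Rle_trans with (eps / (L * (g 1 - g 0) + 1) * (L * (g 1 - g 0) + 1)).
     apply Rmult_le_compat_r. pose proof (Rmult_le_pos _ _ HL HV); lra. lra.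
     right; field. pose proof (Rmult_le_pos _ _ HL HV); lra. }
   pose proof (Rmult_le_pos _ _ HL HV). nra. }
 assert (P1 := part_unif N HN). assert (P2 := part_unif M ltac:(lia)).
 assert (PM : part M (up M) (up M) (delta / 2)).
 { destruct P2 as [A [B C]]. split; [|split]; auto. intros i Hi. destruct (C i Hi). split; auto. lra. }
 specialize (Hd _ _ _ PM). simpl in Hd.
 pose proof (RS_diff g f L _ _ _ _ _ _ _ _ Hg Hf HL P1 P2).
 unfold Lam. replace (RS g f N (up N) (up N) - I) with ((RS g f N (up N) (up N) - RS g f M (up M) (up M)) + (RS g f M (up M) (up M) - I)) by ring.
 eapply Rle_trans. apply Rabs_triang. 
 replace (L * (/ INR N + / INR M) * (g 1 - g 0)) with (L * / INR N * (g 1 - g 0) + L * / INR M * (g 1 - g 0)) in H by ring.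
 lra. Qed.

Lemma close_RS g f L l : mono g -> lip f L -> 0 <= L ->
  (forall N, (1 <= N)%nat -> Rabs (Lam g N f - l) <= L * / INR N * (g 1 - g 0)) ->
  is_RS_integral (V := R_NormedModule) f g 0 1 l.
Proof. intros Hg Hf HL Hl eps.
 assert (HV : 0 <= g 1 - g 0) by (pose proof (Hg 0 1); lra).
 set (K := L * (g 1 - g 0) + 1).
 assert (HK : 0 < K) by (unfold K; pose proof (Rmult_le_pos _ _ HL HV); lra).
 assert (Hd : 0 < eps / (3 * K)) by (apply Rdiv_lt_0_compat; [apply cond_pos| lra]).
 destruct (archimed_cor1 _ Hd) as [N [HN1 HN2]].
 exists (mkposreal _ Hd). intros n p xi P0 P1 P2.
 destruct n. exfalso. rewrite P0 in P1; lra.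
 simpl pred. change (Rabs (sum_n (fun i => (g (p (S i)) - g (p i)) * f (xi i)) n - l) < eps).
 rewrite rsum_sum_n. fold (RS g f (S n) p xi).
 assert (HP : part (S n) p xi (eps / (3 * K))).
 { split; [|split]; auto. intros i Hi. destruct (P2 i Hi). split; auto. simpl in H0. lra. }
 pose proof (RS_diff g f L _ _ _ _ _ _ _ _ Hg Hf HL HP (part_unif N ltac:(lia))).
 specialize (Hl N ltac:(lia)). unfold Lam in Hl.
 assert (E1 : L * (eps / (3 * K) + / INR N) * (g 1 - g 0) <= 2 * eps / 3).
 { assert (L * (g 1 - g 0) <= K) by (unfold K; lra).
   assert (0 <= L * (g 1 - g 0)) by (apply Rmult_le_pos; auto).
   assert (0 < / INR N) by (apply Rinv_0_lt_compat, lt_0_INR; lia).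
   replace (L * (eps / (3 * K) + / INR N) * (g 1 - g 0)) with ((L * (g 1 - g 0)) * (eps / (3 * K) + / INR N)) by ring.
   apply Rle_trans with (K * (eps / (3*K) + eps / (3*K))). apply Rmult_le_compat; lra.
   right. field. lra. }
 assert (E2 : L * / INR N * (g 1 - g 0) < eps / 3).
 { assert (L * (g 1 - g 0) <= K) by (unfold K; lra).
   assert (0 <= L * (g 1 - g 0)) by (apply Rmult_le_pos; auto).
   assert (0 < / INR N) by (apply Rinv_0_lt_compat, lt_0_INR; lia).
   replace (L * / INR N * (g 1 - g 0)) with ((L * (g 1 - g 0)) * / INR N) by ring.
   apply Rle_lt_trans with (K * / INR N). apply Rmult_le_compat_r; lra.
   apply Rlt_le_trans with (K*(eps/(3*K))). apply Rmult_lt_compat_l; lra. right; field; lra. }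
 replace (RS g f (S n) p xi - l) with ((RS g f (S n) p xi - RS g f N (up N) (up N)) + (RS g f N (up N) (up N) - l)) by ring.
 eapply Rle_lt_trans. apply Rabs_triang. pose proof (cond_pos eps). lra. Qed.

Lemma exist_RS g f L : mono g -> lip f L -> 0 <= L ->
  exists I, is_RS_integral (V := R_NormedModule) f g 0 1 I.
Proof. intros Hg Hf HL.
 assert (HV : 0 <= g 1 - g 0) by (pose proof (Hg 0 1); lra).
 set (u := fun N => Lam g (S N) f).
 assert (Hu : forall N M, Rabs (u N - u M) <= L * (/ INR (S N) + / INR (S M)) * (g 1 - g 0)).
 { intros. apply RS_diff; auto; apply part_unif; lia. }
 assert (Hc : ex_lim_seq_cauchy u).
 { intros eps. set (K := L * (g 1 - g 0) + 1).
   assert (HK : 0 < K) by (unfold K; pose proof (Rmult_le_pos _ _ HL HV); lra).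
   assert (Hd : 0 < eps / (3 * K)) by (apply Rdiv_lt_0_compat; [apply cond_pos| lra]).
   destruct (archimed_cor1 _ Hd) as [N0 [HN1 HN2]]. exists N0. intros n m Hn Hm.
   eapply Rle_lt_trans. apply Hu.
   assert (forall k, (N0 <= k)%nat -> / INR (S k) <= / INR N0).
   { intros k Hk. apply Rinv_le_contravar. apply lt_0_INR; lia. apply le_INR; lia. }
   pose proof (H n Hn). pose proof (H m Hm).
   assert (0 < / INR (S n)) by (apply Rinv_0_lt_compat, lt_0_INR; lia).
   assert (0 < / INR (S m)) by (apply Rinv_0_lt_compat, lt_0_INR; lia).
   assert (L * (g 1 - g 0) <= K) by (unfold K; lra).
   assert (0 <= L * (g 1 - g 0)) by (apply Rmult_le_pos; auto).
   replace (L * (/ INR (S n) + / INR (S m)) * (g 1 - g 0)) with ((L * (g 1 - g 0)) * (/ INR (S n) + / INR (S m))) by ring.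
   apply Rle_lt_trans with (K * (eps / (3*K) + eps / (3*K))). apply Rmult_le_compat; lra.
   replace (K * (eps / (3 * K) + eps / (3 * K))) with (2 * eps / 3) by (field; lra).
   pose proof (cond_pos eps); lra. }
 apply ex_lim_seq_cauchy_corr in Hc. apply Lim_seq_correct' in Hc.
 set (l := real (Lim_seq u)) in *. exists l.
 apply (close_RS g f L l); auto. intros N HN.
 apply is_lim_seq_spec in Hc.
 apply le_eps2. intros eps Heps. destruct (Hc (mkposreal _ Heps)) as [M HM].
 destruct N. lia.
 set (K := L * (g 1 - g 0) + 1).
 assert (HK : 0 < K) by (unfold K; pose proof (Rmult_le_pos _ _ HL HV); lra).
 assert (Hd : 0 < eps / K) by (apply Rdiv_lt_0_compat; lra).
 destruct (archimed_cor1 _ Hd) as [M2 [HM1 HM2]].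
 set (m := (M + M2)%nat). specialize (HM m ltac:(unfold m; lia)). simpl in HM.
 pose proof (Hu N m). fold (u N).
 replace (u N - l) with ((u N - u m) + (u m - l)) by ring.
 eapply Rle_trans. apply Rabs_triang.
 assert (/ INR (S m) <= / INR M2) by (apply Rinv_le_contravar; [apply lt_0_INR; lia| apply le_INR; unfold m; lia]).
 assert (0 < / INR (S m)) by (apply Rinv_0_lt_compat, lt_0_INR; lia).
 assert (L * (g 1 - g 0) <= K) by (unfold K; lra).
 assert (0 <= L * (g 1 - g 0)) by (apply Rmult_le_pos; auto).
 assert (L * (g 1 - g 0) * / INR (S m) <= eps).
 { apply Rle_trans with (K * (eps / K)). apply Rmult_le_compat; lra. right; field; lra. }
 replace (L * (/ INR (S N) + / INR (S m)) * (g 1 - g 0)) with (L * / INR (S N) * (g 1 - g 0) + L * (g 1 - g 0) * / INR (S m)) in H by ring.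
 lra. Qed.

Lemma PI_gt3 : 3 < PI.
Proof. pose proof PI2_3_2. lra. Qed.

Lemma sa a : sin_approx a 1 = a - a^3/6.
Proof. unfold sin_approx, sin_term. simpl sum_f_R0. replace (INR (Factorial.fact (2*0+1))) with 1 by (simpl; ring).
 replace (INR (Factorial.fact (2*1+1))) with 6 by (simpl; ring). simpl. field. Qed.
Lemma ca a : cos_approx a 1 = 1 - a^2/2.
Proof. unfold cos_approx, cos_term. simpl sum_f_R0. replace (INR (Factorial.fact (2*0))) with 1 by (simpl; ring).
 replace (INR (Factorial.fact (2*1))) with 2 by (simpl; ring). simpl. field. Qed.

Lemma sin_le_x x : 0 <= x -> sin x <= x.
Proof. intros Hx. destruct (Req_dec x 0). subst; rewrite sin_0; lra. left; apply sin_lt_x; lra. Qed.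

Lemma sin_ge_0 x : 0 <= x -> -x <= sin x.
Proof. intros Hx. pose proof PI_gt3. destruct (Rle_dec x PI).
 - pose proof (sin_ge_0 x Hx r). lra.
 - pose proof (SIN_bound x). lra. Qed.

Lemma abs_sin_le x : Rabs (sin x) <= Rabs x.
Proof. destruct (Rle_dec 0 x).
 - pose proof (sin_le_x x r). pose proof (sin_ge_0 x r). unfold Rabs; repeat destruct Rcase_abs; lra.
 - pose proof (sin_le_x (-x) ltac:(lra)). pose proof (sin_ge_0 (-x) ltac:(lra)).
   rewrite sin_antisym in *. unfold Rabs; repeat destruct Rcase_abs; lra. Qed.

Lemma cos_lip a b : Rabs (cos a - cos b) <= Rabs (a - b).
Proof. rewrite form2. rewrite !Rabs_mult. pose proof (abs_sin_le ((a - b)/2)).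
 pose proof (SIN_bound ((a+b)/2)). assert (Rabs (sin ((a + b) / 2)) <= 1) by (unfold Rabs; destruct Rcase_abs; lra).
 replace (Rabs (-2)) with 2 by (unfold Rabs; destruct Rcase_abs; lra).
 replace (Rabs ((a - b) / 2)) with (Rabs (a - b) / 2) in H.
 2:{ unfold Rdiv. rewrite Rabs_mult, (Rabs_pos_eq (/2)); lra. }
 pose proof (Rabs_pos (sin ((a - b) / 2))). pose proof (Rabs_pos (sin ((a + b) / 2))). nra. Qed.

Lemma sin_lip a b : Rabs (sin a - sin b) <= Rabs (a - b).
Proof. rewrite form4. rewrite !Rabs_mult. pose proof (abs_sin_le ((a - b)/2)).
 pose proof (COS_bound ((a+b)/2)). assert (Rabs (cos ((a + b) / 2)) <= 1) by (unfold Rabs; destruct Rcase_abs; lra).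
 replace (Rabs 2) with 2 by (rewrite Rabs_pos_eq; lra).
 replace (Rabs ((a - b) / 2)) with (Rabs (a - b) / 2) in H.
 2:{ unfold Rdiv. rewrite Rabs_mult, (Rabs_pos_eq (/2)); lra. }
 pose proof (Rabs_pos (sin ((a - b) / 2))). pose proof (Rabs_pos (cos ((a + b) / 2))). nra. Qed.

Lemma cos_small d : 0 <= d <= 1 -> Rabs (cos d - 1) <= d * d.
Proof. intros Hd. pose proof PI_gt3. destruct (cos_bound d 0 ltac:(lra) ltac:(lra)) as [HH _].
 replace (2*0+1)%nat with 1%nat in HH by reflexivity. rewrite ca in HH.
 pose proof (COS_bound d). unfold Rabs; destruct Rcase_abs; simpl in *; nra. Qed.

Lemma sin_small d : 0 <= d <= 1 -> Rabs (sin d - d) <= d * d.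
Proof. intros Hd. pose proof PI_gt3. destruct (sin_bound d 0 ltac:(lra) ltac:(lra)) as [HH _].
 replace (2*0+1)%nat with 1%nat in HH by reflexivity. rewrite sa in HH.
 pose proof (sin_le_x d ltac:(lra)).
 assert (d^3 <= d*d) by (simpl; nra).
 unfold Rabs; destruct Rcase_abs; simpl in *; nra. Qed.

Lemma cos_decr_le x y : 0 <= x -> x <= y -> y <= PI -> cos y <= cos x.
Proof. intros. destruct (Req_dec x y). subst; lra. left; apply cos_decreasing_1; lra. Qed.

Lemma cos_lt_1 t : 0 < t < 2 * PI -> cos t < 1.
Proof. intros Ht. pose proof PI_RGT_0. destruct (Rle_dec t PI).
 - rewrite <- cos_0. apply cos_decreasing_1; lra.
 - replace t with (- (2*PI - t) + 2 * INR 1 * PI) by (simpl; ring). rewrite cos_period, <- cos_sym.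
   rewrite <- cos_0. apply cos_decreasing_1; lra. Qed.

Lemma cos_far r u : 0 < r <= 1/2 -> r <= Rabs u <= 1 - r -> cos (2 * PI * u) <= cos (2 * PI * r).
Proof. intros Hr Hu. pose proof PI_RGT_0.
 assert (E : cos (2 * PI * u) = cos (2 * PI * Rabs u)).
 { unfold Rabs; destruct Rcase_abs; auto. rewrite (cos_sym (2*PI*u)). f_equal; ring. }
 rewrite E. destruct (Rle_dec (Rabs u) (1/2)).
 - apply cos_decr_le; nra.
 - replace (2 * PI * Rabs u) with (- (2 * PI * (1 - Rabs u)) + 2 * INR 1 * PI) by (simpl; ring).
   rewrite cos_period, <- cos_sym. apply cos_decr_le; nra. Qed.

Definition GA K g t := rsum K (fun k => cos (g + INR k * t)).
Definition GB K g t := rsum K (fun k => sin (g + INR k * t)).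

Lemma geo K g t : GA K g t * (cos t - 1) - GB K g t * sin t = cos (g + INR K * t) - cos g /\
  GA K g t * sin t + GB K g t * (cos t - 1) = sin (g + INR K * t) - sin g.
Proof. unfold GA, GB. induction K; simpl rsum.
 - simpl. replace (g + 0 * t) with g by ring. split; ring.
 - destruct IHK as [H1 H2]. rewrite S_INR.
   replace (g + (INR K + 1) * t) with ((g + INR K * t) + t) by ring.
   rewrite (cos_plus (g + INR K * t) t), (sin_plus (g + INR K * t) t). split; lra. Qed.

Lemma geo_sq K g t : (GA K g t ^ 2 + GB K g t ^ 2) * (2 - 2 * cos t) =
  (cos (g + INR K * t) - cos g) ^ 2 + (sin (g + INR K * t) - sin g) ^ 2.
Proof. destruct (geo K g t) as [H1 H2]. rewrite <- H1, <- H2. pose proof (sin2_cos2 t).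
 unfold Rsqr in H. nra. Qed.

Lemma geo_bound K g t : cos t < 1 -> GA K g t ^ 2 + GB K g t ^ 2 <= 4 / (2 - 2 * cos t).
Proof. intros Hc. pose proof (geo_sq K g t).
 assert ((cos (g + INR K * t) - cos g) ^ 2 + (sin (g + INR K * t) - sin g) ^ 2 <= 4).
 { pose proof (sin2_cos2 (g + INR K * t)). pose proof (sin2_cos2 g). unfold Rsqr in *.
   pose proof (COS_bound g). pose proof (COS_bound (g + INR K * t)).
   pose proof (pow2_ge_0 (cos (g + INR K * t) + cos g)). pose proof (pow2_ge_0 (sin (g + INR K * t) + sin g)).
   nra. }
 apply Rmult_le_reg_r with (2 - 2 * cos t). lra.
 unfold Rdiv. rewrite Rmult_assoc, Rinv_l by lra. lra. Qed.

Lemma geo_zero K g t : cos t < 1 -> cos (g + INR K * t) = cos g -> sin (g + INR K * t) = sin g ->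
  GA K g t = 0.
Proof. intros Hc H1 H2. pose proof (geo_sq K g t). rewrite H1, H2 in H.
 replace ((cos g - cos g) ^ 2 + (sin g - sin g) ^ 2) with 0 in H by ring.
 assert (GA K g t ^ 2 + GB K g t ^ 2 = 0).
 { apply Rmult_eq_reg_r with (2 - 2 * cos t). lra. lra. }
 pose proof (pow2_ge_0 (GA K g t)). pose proof (pow2_ge_0 (GB K g t)).
 assert (GA K g t ^ 2 = 0) by lra. simpl in H4. nra. Qed.

Definition Ker K u := / INR K * (GA K 0 (2 * PI * u) ^ 2 + GB K 0 (2 * PI * u) ^ 2).

Lemma Ker_pos K u : 0 <= Ker K u.
Proof. unfold Ker. apply Rmult_le_pos. destruct K. simpl; rewrite Rinv_0; lra. left; apply Rinv_0_lt_compat, lt_0_INR; lia.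
 pose proof (pow2_ge_0 (GA K 0 (2 * PI * u))). pose proof (pow2_ge_0 (GB K 0 (2 * PI * u))). lra. Qed.

Lemma rsum_sq n (a : nat -> R) : rsum n a ^ 2 = rsum n (fun k => rsum n (fun l => a k * a l)).
Proof. simpl. rewrite Rmult_1_r. rewrite <- rsum_scal_r. apply rsum_ext; intros.
 rewrite <- rsum_scal. reflexivity. Qed.

Lemma Ker_exp K u : Ker K u = / INR K * rsum K (fun k => rsum K (fun l => cos ((INR k - INR l) * (2 * PI * u)))).
Proof. unfold Ker, GA, GB. rewrite !rsum_sq, <- rsum_plus. f_equal. apply rsum_ext; intros k Hk.
 rewrite <- rsum_plus. apply rsum_ext; intros l Hl.
 replace ((INR k - INR l) * (2 * PI * u)) with ((0 + INR k * (2 * PI * u)) - (0 + INR l * (2 * PI * u))) by ring.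
 rewrite cos_minus. ring. Qed.

Lemma rsum_delta_out K k c : (K <= k)%nat -> rsum K (fun l => if Nat.eq_dec k l then c else 0) = 0.
Proof. intros H. rewrite (rsum_ext _ _ (fun _ => 0)). rewrite rsum_const; ring.
 intros i Hi. destruct Nat.eq_dec. lia. auto. Qed.

Lemma rsum_delta K k c : (k < K)%nat -> rsum K (fun l => if Nat.eq_dec k l then c else 0) = c.
Proof. induction K; intros H. lia. simpl rsum. destruct (Nat.eq_dec k K).
 - subst. rewrite rsum_delta_out by lia. ring.
 - rewrite IHK by lia. ring. Qed.

Lemma INR_dist k l : k <> l -> 1 <= Rabs (INR k - INR l).
Proof. intros H. destruct (Nat.lt_ge_cases k l).
 - assert (INR k + 1 <= INR l) by (rewrite <- S_INR; apply le_INR; lia).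
   rewrite Rabs_left1 by lra. lra.
 - assert (INR l + 1 <= INR k) by (rewrite <- S_INR; apply le_INR; lia).
   rewrite Rabs_pos_eq by lra. lra. Qed.

Lemma inner_PU K k l x : (1 <= K)%nat -> (k < K)%nat -> (l < K)%nat ->
  rsum K (fun j => cos ((INR k - INR l) * (2 * PI * (x - INR j / INR K)))) =
  if Nat.eq_dec k l then INR K else 0.
Proof. intros HK Hk Hl. assert (HKp : 0 < INR K) by (apply lt_0_INR; lia).
 destruct (Nat.eq_dec k l).
 - subst. rewrite (rsum_ext _ _ (fun _ => 1)). rewrite rsum_const; ring.
   intros. replace ((INR l - INR l) * (2 * PI * (x - INR i / INR K))) with 0 by ring. apply cos_0.
 - set (gm := (INR k - INR l) * (2 * PI * x)). set (th := - ((INR k - INR l) * (2 * PI) / INR K)).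
   rewrite (rsum_ext _ _ (fun j => cos (gm + INR j * th))).
   2:{ intros j Hj. f_equal. unfold gm, th. field. lra. }
   apply geo_zero.
   + assert (Hd := INR_dist k l n).
     assert (Hb : Rabs (INR k - INR l) < INR K).
     { assert (INR k < INR K) by (apply lt_INR; lia). assert (INR l < INR K) by (apply lt_INR; lia).
       pose proof (pos_INR k). pose proof (pos_INR l). unfold Rabs; destruct Rcase_abs; lra. }
     assert (E : cos th = cos (2 * PI * (Rabs (INR k - INR l) / INR K))).
     { unfold th. unfold Rabs; destruct Rcase_abs.
       - f_equal. field. lra.
       - rewrite cos_sym. f_equal. field. lra. }
     rewrite E. apply cos_lt_1. pose proof PI_RGT_0. split.
     * apply Rmult_lt_0_compat. lra. apply Rdiv_lt_0_compat; lra.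
     * assert (Rabs (INR k - INR l) / INR K < 1).
       { apply (Rmult_lt_reg_r (INR K)); auto. unfold Rdiv. rewrite Rmult_assoc, Rinv_l by lra. lra. }
       nra.
   + replace (gm + INR K * th) with ((gm - 2 * INR k * PI) + 2 * INR l * PI) by (unfold th; field; lra).
     rewrite cos_period. pattern gm at 2. replace gm with ((gm - 2 * INR k * PI) + 2 * INR k * PI) by ring.
     rewrite cos_period. reflexivity.
   + replace (gm + INR K * th) with ((gm - 2 * INR k * PI) + 2 * INR l * PI) by (unfold th; field; lra).
     rewrite sin_period. pattern gm at 2. replace gm with ((gm - 2 * INR k * PI) + 2 * INR k * PI) by ring.
     rewrite sin_period. reflexivity. Qed.

Lemma PU K x : (1 <= K)%nat -> / INR K * rsum K (fun j => Ker K (x - INR j / INR K)) = 1.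
Proof. intros HK. assert (HKp : 0 < INR K) by (apply lt_0_INR; lia).
 rewrite (rsum_ext _ _ (fun j => / INR K * rsum K (fun k => rsum K (fun l =>
    cos ((INR k - INR l) * (2 * PI * (x - INR j / INR K))))))) by (intros; apply Ker_exp).
 rewrite rsum_scal, rsum_swap.
 rewrite (rsum_ext _ _ (fun k => rsum K (fun l => rsum K (fun j => cos ((INR k - INR l) * (2 * PI * (x - INR j / INR K))))))).
 2:{ intros k Hk. apply rsum_swap. }
 rewrite (rsum_ext _ _ (fun k => INR K)).
 2:{ intros k Hk. rewrite (rsum_ext _ _ (fun l => if Nat.eq_dec k l then INR K else 0)).
     apply rsum_delta; auto. intros l Hl. apply inner_PU; auto. }
 rewrite rsum_const. field. lra. Qed.

Definition Tf K (phi : R -> R) x := / INR K * rsum K (fun j => phi (INR j / INR K) * Ker K (x - INR j / INR K)).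

Lemma grid_in K j : (1 <= K)%nat -> (j < K)%nat -> 0 <= INR j / INR K < 1.
Proof. intros HK Hj. assert (0 < INR K) by (apply lt_0_INR; lia).
 assert (INR j < INR K) by (apply lt_INR; lia). pose proof (pos_INR j). split.
 apply Rdiv_le_0_compat; lra. apply (Rmult_lt_reg_r (INR K)); auto. unfold Rdiv.
 rewrite Rmult_assoc, Rinv_l by lra. lra. Qed.

Lemma T_bound K phi x : (1 <= K)%nat -> (forall y, 0 <= y <= 1 -> Rabs (phi y) <= 1) ->
  Rabs (Tf K phi x) <= 1.
Proof. intros HK Hphi. assert (0 < / INR K) by (apply Rinv_0_lt_compat, lt_0_INR; lia).
 unfold Tf. rewrite Rabs_mult, Rabs_pos_eq by lra. rewrite <- (PU K x HK).
 apply Rmult_le_compat_l. lra. eapply Rle_trans. apply rsum_abs. apply rsum_le. intros j Hj.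
 rewrite Rabs_mult, (Rabs_pos_eq (Ker _ _)) by apply Ker_pos.
 pose proof (Ker_pos K (x - INR j / INR K)). pose proof (grid_in K j HK Hj).
 pose proof (Hphi (INR j / INR K) ltac:(lra)). nra. Qed.

Lemma T_approx K phi Lp r eta x : (1 <= K)%nat -> 0 < r -> r <= eta -> r <= 1/2 -> eta <= x <= 1 - eta ->
  0 <= Lp -> lip phi Lp -> (forall y, 0 <= y <= 1 -> Rabs (phi y) <= 1) ->
  Rabs (phi x - Tf K phi x) <= Lp * r + 4 / (INR K * (1 - cos (2 * PI * r))).
Proof. intros HK Hr Hre Hr2 Hx HLp Hlip Hphi.
 assert (HKp : 0 < INR K) by (apply lt_0_INR; lia).
 assert (HKi : 0 < / INR K) by (apply Rinv_0_lt_compat; lra).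
 pose proof PI_RGT_0.
 assert (Hc0 : cos (2 * PI * r) < 1) by (apply cos_lt_1; nra).
 set (c0 := cos (2 * PI * r)) in *.
 assert (E : phi x - Tf K phi x = / INR K * rsum K (fun j => (phi x - phi (INR j / INR K)) * Ker K (x - INR j / INR K))).
 { assert (E0 : phi x = / INR K * rsum K (fun j => phi x * Ker K (x - INR j / INR K))).
   { rewrite rsum_scal. rewrite <- Rmult_assoc, (Rmult_comm (/ INR K)), Rmult_assoc, PU by auto. ring. }
   unfold Tf. rewrite E0 at 1. rewrite <- Rmult_minus_distr_l, <- rsum_minus. f_equal.
   apply rsum_ext; intros; ring. }
 rewrite E, Rabs_mult, Rabs_pos_eq by lra.
 apply Rle_trans with (/ INR K * rsum K (fun j => Lp * r * Ker K (x - INR j / INR K) + 4 / (INR K * (1 - c0)))).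
 - apply Rmult_le_compat_l. lra. eapply Rle_trans. apply rsum_abs. apply rsum_le. intros j Hj.
   pose proof (grid_in K j HK Hj). set (xj := INR j / INR K) in *.
   rewrite Rabs_mult, (Rabs_pos_eq (Ker _ _)) by apply Ker_pos.
   pose proof (Ker_pos K (x - xj)).
   assert (0 < 4 / (INR K * (1 - c0))) by (apply Rdiv_lt_0_compat; [lra| apply Rmult_lt_0_compat; lra]).
   destruct (Rle_dec (Rabs (x - xj)) r).
   + assert (Rabs (phi x - phi xj) <= Lp * r).
     { eapply Rle_trans. apply Hlip; lra. apply Rmult_le_compat_l; lra. }
     nra.
   + assert (Hf : r <= Rabs (x - xj) <= 1 - r) by (split; [lra|]; unfold Rabs; destruct Rcase_abs; lra).
     assert (Hcf := cos_far r (x - xj) ltac:(lra) Hf). fold c0 in Hcf.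
     assert (Hk : Ker K (x - xj) <= / INR K * (4 / (2 - 2 * cos (2 * PI * (x - xj))))).
     { unfold Ker. apply Rmult_le_compat_l. lra. apply geo_bound. lra. }
     assert (4 / (2 - 2 * cos (2 * PI * (x - xj))) <= 4 / (2 - 2 * c0)).
     { unfold Rdiv. apply Rmult_le_compat_l. lra. apply Rinv_le_contravar; lra. }
     assert (Rabs (phi x - phi xj) <= 2).
     { pose proof (Hphi x ltac:(lra)). pose proof (Hphi xj ltac:(lra)).
       eapply Rle_trans. apply Rabs_triang. rewrite Rabs_Ropp. lra. }
     assert (Ker K (x - xj) <= 2 / (INR K * (1 - c0))).
     { eapply Rle_trans. apply Hk. apply Rle_trans with (/ INR K * (4 / (2 - 2 * c0))).
       apply Rmult_le_compat_l; lra. right. field. split; lra. }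
     assert (Rabs (phi x - phi xj) * Ker K (x - xj) <= 2 * (2 / (INR K * (1 - c0)))).
     { apply Rmult_le_compat; auto. apply Rabs_pos. }
     assert (0 <= Lp * r * Ker K (x - xj)) by (apply Rmult_le_pos; [apply Rmult_le_pos|]; lra).
     replace (2 * (2 / (INR K * (1 - c0)))) with (4 / (INR K * (1 - c0))) in H5 by (field; split; lra).
     lra.
 - rewrite rsum_plus, rsum_const, (rsum_scal K (Lp * r)), Rmult_plus_distr_l.
   rewrite <- Rmult_assoc, (Rmult_comm (/ INR K)), Rmult_assoc, PU by auto.
   right. field. split; lra. Qed.

Lemma up_range N i : (1 <= N)%nat -> (i <= N)%nat -> 0 <= up N i <= 1.
Proof. intros. pose proof (part_range _ _ _ _ (part_unif N H) i H0). auto. Qed.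

Lemma up_S N i : (1 <= N)%nat -> up N (S i) = up N i + / INR N.
Proof. intros. unfold up. rewrite S_INR. field. apply not_0_INR. lia. Qed.

Lemma Lam_ext g N f h : (1 <= N)%nat -> (forall x, 0 <= x <= 1 -> f x = h x) -> Lam g N f = Lam g N h.
Proof. intros HN H. unfold Lam, RS. apply rsum_ext. intros i Hi. rewrite H. auto. apply up_range; lia. Qed.

Lemma Lam_plus g N f h : Lam g N (fun x => f x + h x) = Lam g N f + Lam g N h.
Proof. unfold Lam, RS. rewrite <- rsum_plus. apply rsum_ext; intros; ring. Qed.

Lemma Lam_scal g N c f : Lam g N (fun x => c * f x) = c * Lam g N f.
Proof. unfold Lam, RS. rewrite <- rsum_scal. apply rsum_ext; intros; ring. Qed.

Lemma Lam_minus g N f h : Lam g N (fun x => f x - h x) = Lam g N f - Lam g N h.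
Proof. unfold Lam, RS. rewrite <- rsum_minus. apply rsum_ext; intros; ring. Qed.

Lemma Lam_rsum g N J (F : nat -> R -> R) : Lam g N (fun x => rsum J (fun j => F j x)) = rsum J (fun j => Lam g N (F j)).
Proof. unfold Lam, RS. rewrite rsum_swap. apply rsum_ext. intros. rewrite <- rsum_scal. reflexivity. Qed.

Lemma Lam_w g N i : mono g -> (1 <= N)%nat -> (i < N)%nat -> 0 <= g (up N (S i)) - g (up N i).
Proof. intros Hg HN Hi. pose proof (up_range N i HN ltac:(lia)). pose proof (up_range N (S i) HN ltac:(lia)).
 rewrite up_S in * by auto. assert (0 < / INR N) by (apply Rinv_0_lt_compat, lt_0_INR; lia).
 pose proof (Hg (up N i) (up N i + / INR N)). lra. Qed.

Lemma Lam_le g N f h : mono g -> (1 <= N)%nat -> (forall x, 0 <= x <= 1 -> Rabs (f x) <= h x) ->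
  Rabs (Lam g N f) <= Lam g N h.
Proof. intros Hg HN H. unfold Lam, RS. eapply Rle_trans. apply rsum_abs. apply rsum_le. intros i Hi.
 rewrite Rabs_mult, Rabs_pos_eq by (apply Lam_w; auto). apply Rmult_le_compat_l. apply Lam_w; auto.
 apply H. apply up_range; lia. Qed.

Lemma Lam_const g N c : (1 <= N)%nat -> Lam g N (fun _ => c) = c * (g 1 - g 0).
Proof. intros HN. unfold Lam, RS. rewrite rsum_scal_r, (rsum_telescope N (fun i => g (up N i))).
 unfold up. replace (INR N / INR N) with 1 by (field; apply not_0_INR; lia).
 replace (INR 0 / INR N) with 0 by (simpl; field; apply not_0_INR; lia). ring. Qed.

Definition indL c x := if Rlt_dec x c then 1 else 0.
Definition indR c x := if Rlt_dec c x then 1 else 0.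

Lemma Lam_indL g N c : mono g -> (1 <= N)%nat -> 0 <= c -> c + / INR N <= 1 ->
  Lam g N (indL c) <= g (c + / INR N) - g 0.
Proof. intros Hg HN Hc Hc1. unfold Lam, RS.
 assert (HNi : 0 < / INR N) by (apply Rinv_0_lt_compat, lt_0_INR; lia).
 assert (forall n, (n <= N)%nat -> rsum n (fun i => (g (up N (S i)) - g (up N i)) * indL c (up N i)) <= g (up N n) - g 0 /\
    rsum n (fun i => (g (up N (S i)) - g (up N i)) * indL c (up N i)) <= g (c + / INR N) - g 0).
 { induction n; intros Hn.
   - simpl. unfold up. simpl. replace (0 / INR N) with 0 by (field; apply not_0_INR; lia).
     split. lra. pose proof (Hg 0 (c + / INR N)). lra.
   - destruct (IHn ltac:(lia)) as [I1 I2]. simpl rsum.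
     pose proof (up_range N n HN ltac:(lia)). pose proof (up_range N (S n) HN Hn).
     pose proof (up_S N n HN).
     destruct (Rlt_dec (up N n) c) as [Hl|Hl].
     + replace (indL c (up N n)) with 1 by (unfold indL; destruct Rlt_dec; lra).
       split. lra. assert (g (up N (S n)) <= g (c + / INR N)) by (apply Hg; lra). lra.
     + replace (indL c (up N n)) with 0 by (unfold indL; destruct Rlt_dec; lra).
       assert (g (up N n) <= g (up N (S n))) by (apply Hg; lra). lra. }
 apply (H N ltac:(lia)). Qed.

Lemma Lam_indR g N c : mono g -> (1 <= N)%nat -> 0 <= c <= 1 ->
  Lam g N (indR c) <= g 1 - g c.
Proof. intros Hg HN Hc. unfold Lam, RS.
 assert (forall n, (n <= N)%nat -> rsum n (fun i => (g (up N (S i)) - g (up N i)) * indR c (up N i)) <= Rmax 0 (g (up N n) - g c)).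
 { induction n; intros Hn.
   - simpl. apply Rmax_l.
   - specialize (IHn ltac:(lia)). simpl rsum.
     pose proof (up_range N n HN ltac:(lia)). pose proof (up_range N (S n) HN Hn).
     pose proof (up_S N n HN). assert (0 < / INR N) by (apply Rinv_0_lt_compat, lt_0_INR; lia).
     destruct (Rlt_dec c (up N n)) as [Hl|Hl].
     + replace (indR c (up N n)) with 1 by (unfold indR; destruct Rlt_dec; lra). assert (g c <= g (up N n)) by (apply Hg; lra). assert (g (up N n) <= g (up N (S n))) by (apply Hg; lra).
       rewrite Rmax_right in IHn by lra. rewrite Rmax_right by lra. lra.
     + replace (indR c (up N n)) with 0 by (unfold indR; destruct Rlt_dec; lra).
       assert (g (up N n) <= g c) by (apply Hg; lra). rewrite Rmax_left in IHn by lra.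
       pose proof (Rmax_l 0 (g (up N (S n)) - g c)). lra. }
 eapply Rle_trans. apply (H N ltac:(lia)). unfold up. replace (INR N / INR N) with 1 by (field; apply not_0_INR; lia).
 pose proof (Hg c 1). unfold Rmax; destruct Rle_dec; lra. Qed.

Lemma lip_cos a b : lip (fun x => cos (a * x + b)) (Rabs a).
Proof. intros x y _ _. eapply Rle_trans. apply cos_lip. right. rewrite <- Rabs_mult. f_equal. ring. Qed.
Lemma lip_sin a b : lip (fun x => sin (a * x + b)) (Rabs a).
Proof. intros x y _ _. eapply Rle_trans. apply sin_lip. right. rewrite <- Rabs_mult. f_equal. ring. Qed.

Lemma INR_rev N i : (i < N)%nat -> INR (N - 1 - i) = INR N - 1 - INR i.
Proof. intros. replace (N - 1 - i)%nat with (N - S i)%nat by lia. rewrite minus_INR by lia. rewrite S_INR. ring. Qed.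

Lemma Lam_sym_sin g N m : mono g -> g 0 = 0 -> g 1 = 1 -> (forall x, 0 <= x <= 1 -> g (1 - x) = 1 - g x) ->
  (1 <= N)%nat -> Rabs (Lam g N (fun x => sin (2 * PI * INR m * x))) <= 2 * PI * INR m / INR N.
Proof. intros Hg H0 H1 Hs HN.
 set (f := fun x => sin (2 * PI * INR m * x)).
 assert (E : Lam g N f = - LamR g N f).
 { unfold Lam, LamR, RS. rewrite rsum_rev, <- rsum_opp.
   apply rsum_ext. intros i Hi.
   assert (HNz : INR N <> 0) by (apply not_0_INR; lia).
   assert (E1 : up N (S (N - 1 - i)) = 1 - up N i).
   { unfold up. rewrite S_INR, INR_rev by auto. field. auto. }
   assert (E2 : up N (N - 1 - i) = 1 - up N (S i)).
   { unfold up. rewrite S_INR, INR_rev by auto. field. auto. }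
   rewrite E1, E2. pose proof (up_range N i HN ltac:(lia)). pose proof (up_range N (S i) HN ltac:(lia)).
   rewrite !Hs by auto. unfold f.
   replace (2 * PI * INR m * (1 - up N (S i))) with (- (2 * PI * INR m * up N (S i)) + 2 * INR m * PI) by ring.
   rewrite sin_period, sin_antisym. ring. }
 assert (Hl := lip_sin (2 * PI * INR m) 0).
 assert (Hf : lip f (2 * PI * INR m)).
 { intros x y Hx Hy. unfold f.
   specialize (Hl x y Hx Hy). simpl in Hl. rewrite !Rplus_0_r in Hl. rewrite (Rabs_pos_eq (2 * PI * INR m)) in Hl. exact Hl.
   pose proof PI_RGT_0. pose proof (pos_INR m). nra. }
 assert (0 <= 2 * PI * INR m) by (pose proof PI_RGT_0; pose proof (pos_INR m); nra).
 pose proof (RS_diff g f _ _ _ _ _ _ _ _ _ Hg Hf H (part_unif N HN) (part_unifR N HN)).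
 fold (Lam g N f) (LamR g N f) in H2. rewrite H0, H1 in H2. rewrite E in *.
 replace (- LamR g N f - LamR g N f) with (-2 * LamR g N f) in H2 by ring.
 rewrite Rabs_mult in H2. rewrite Rabs_Ropp. replace (Rabs (-2)) with 2 in H2 by (unfold Rabs; destruct Rcase_abs; lra).
 unfold Rdiv. lra. Qed.

Lemma Lam_cos_shift g N m gm : (1 <= N)%nat ->
  Rabs (Lam g N (fun x => cos (2 * PI * INR m * x + gm))) <=
  Rabs (Lam g N (fun x => cos (2 * PI * INR m * x))) + Rabs (Lam g N (fun x => sin (2 * PI * INR m * x))).
Proof. intros HN.
 rewrite (Lam_ext g N _ (fun x => cos gm * cos (2 * PI * INR m * x) + (- sin gm) * sin (2 * PI * INR m * x))) by
   (auto; intros; rewrite cos_plus; ring).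
 rewrite Lam_plus, !Lam_scal. eapply Rle_trans. apply Rabs_triang. rewrite !Rabs_mult, Rabs_Ropp.
 pose proof (COS_bound gm). pose proof (SIN_bound gm).
 assert (Rabs (cos gm) <= 1) by (unfold Rabs; destruct Rcase_abs; lra).
 assert (Rabs (sin gm) <= 1) by (unfold Rabs; destruct Rcase_abs; lra).
 pose proof (Rabs_pos (Lam g N (fun x => cos (2 * PI * INR m * x)))).
 pose proof (Rabs_pos (Lam g N (fun x => sin (2 * PI * INR m * x)))).
 pose proof (Rabs_pos (cos gm)). pose proof (Rabs_pos (sin gm)). nra. Qed.

Lemma Lam_triple g N K (h : nat -> nat -> nat -> R -> R) E : (1 <= K)%nat ->
  (forall j k l, (j < K)%nat -> (k < K)%nat -> (l < K)%nat -> Rabs (Lam g N (h j k l)) <= E) ->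
  Rabs (Lam g N (fun x => / INR K * rsum K (fun j => / INR K * rsum K (fun k => rsum K (fun l => h j k l x)))))
    <= INR K * E.
Proof. intros HK H. assert (HKp : 0 < INR K) by (apply lt_0_INR; lia).
 rewrite Lam_scal, Lam_rsum. rewrite Rabs_mult, Rabs_pos_eq by (left; apply Rinv_0_lt_compat; lra).
 apply Rle_trans with (/ INR K * rsum K (fun j => / INR K * rsum K (fun k => rsum K (fun l => E)))).
 - apply Rmult_le_compat_l. left; apply Rinv_0_lt_compat; lra.
   eapply Rle_trans. apply rsum_abs. apply rsum_le. intros j Hj.
   rewrite Lam_scal, Lam_rsum, Rabs_mult, Rabs_pos_eq by (left; apply Rinv_0_lt_compat; lra).
   apply Rmult_le_compat_l. left; apply Rinv_0_lt_compat; lra.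
   eapply Rle_trans. apply rsum_abs. apply rsum_le. intros k Hk.
   rewrite Lam_rsum. eapply Rle_trans. apply rsum_abs. apply rsum_le. intros l Hl. auto.
 - right. rewrite !rsum_const. field. lra. Qed.

Definition hh n K (psi : R -> R) j k l x :=
  / 2 * (cos (2 * PI * INR (n + k - l) * x + (psi (INR j / INR K) - (INR k - INR l) * (2 * PI * (INR j / INR K)))) +
         cos (2 * PI * INR (n + l - k) * x + (psi (INR j / INR K) + (INR k - INR l) * (2 * PI * (INR j / INR K))))).

Lemma App_eq n K psi x : (1 <= K)%nat -> (K <= n)%nat ->
  cos (2 * PI * INR n * x) * Tf K (fun y => cos (psi y)) x - sin (2 * PI * INR n * x) * Tf K (fun y => sin (psi y)) x
  = / INR K * rsum K (fun j => / INR K * rsum K (fun k => rsum K (fun l => hh n K psi j k l x))).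
Proof. intros HK HKn. unfold Tf.
 transitivity (/ INR K * (rsum K (fun j => cos (2 * PI * INR n * x) * (cos (psi (INR j / INR K)) * Ker K (x - INR j / INR K)))
    - rsum K (fun j => sin (2 * PI * INR n * x) * (sin (psi (INR j / INR K)) * Ker K (x - INR j / INR K))))).
 { rewrite !rsum_scal. ring. }
 rewrite <- rsum_minus. f_equal. apply rsum_ext. intros j Hj.
 set (xj := INR j / INR K). set (A := 2 * PI * INR n * x + psi xj).
 transitivity (cos A * Ker K (x - xj)).
 { unfold A. rewrite cos_plus. ring. }
 rewrite Ker_exp. rewrite <- Rmult_assoc, (Rmult_comm (cos A)), Rmult_assoc. f_equal.
 rewrite <- rsum_scal. apply rsum_ext. intros k Hk. rewrite <- rsum_scal. apply rsum_ext. intros l Hl.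
 set (B := (INR k - INR l) * (2 * PI * (x - xj))).
 assert (E1 : 2 * PI * INR (n + k - l) * x + (psi xj - (INR k - INR l) * (2 * PI * xj)) = A + B).
 { unfold A, B. rewrite minus_INR by lia. rewrite plus_INR. ring. }
 assert (E2 : 2 * PI * INR (n + l - k) * x + (psi xj + (INR k - INR l) * (2 * PI * xj)) = A - B).
 { unfold A, B. rewrite minus_INR by lia. rewrite plus_INR. ring. }
 unfold hh. fold xj. rewrite E1, E2, cos_plus, cos_minus. field. Qed.

Lemma nat_floor y : 0 <= y -> exists n : nat, INR n <= y < INR n + 1.
Proof. intros Hy. destruct (base_Int_part y) as [B1 B2].
 assert (Hz : (0 <= Int_part y)%Z).
 { assert (-1 < Int_part y)%Z by (apply lt_IZR; lra). lia. }
 exists (Z.to_nat (Int_part y)). rewrite INR_IZR_INZ, Z2Nat.id by auto. lra. Qed.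

Lemma Rabs_sub a b : Rabs (a - b) <= Rabs a + Rabs b.
Proof. unfold Rabs; repeat destruct Rcase_abs; lra. Qed.

Lemma lip_weak f L L' : lip f L -> L <= L' -> lip f L'.
Proof. intros H HL x y Hx Hy. eapply Rle_trans. apply H; auto. apply Rmult_le_compat_r. apply Rabs_pos. auto. Qed.

Lemma small_inv r : 0 < r -> exists N : nat, (1 <= N)%nat /\ forall M, (N <= M)%nat -> / INR M < r.
Proof. intros Hr. destruct (archimed_cor1 r Hr) as [N [H1 H2]]. exists N. split. lia.
 intros M HM. eapply Rle_lt_trans; [|apply H1]. apply Rinv_le_contravar. apply lt_0_INR; lia. apply le_INR; lia. Qed.

Lemma C0pos g D : mono g -> g 0 = 0 -> g 1 = 1 -> (forall x, 0 <= x <= 1 -> g (1 - x) = 1 - g x) ->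
  (forall e, 0 < e -> exists eta, 0 < eta <= 1 /\ g eta <= e) ->
  (forall m N, (1 <= N)%nat -> Rabs (Lam g N (fun x => cos (2 * PI * INR m * x)) - D m) <= 2 * PI * INR m / INR N) ->
  (forall e, 0 < e -> exists M, forall m, (M <= m)%nat -> Rabs (D m) <= e) ->
  forall eps, 0 < eps -> exists T, 0 <= T /\ forall t al, T < t -> exists N0, forall N, (N0 <= N)%nat ->
    Rabs (Lam g N (fun x => cos (t * x + al))) <= eps.
Proof. intros Hg H0 H1 Hs Hc HD HDl eps Heps. pose proof PI_RGT_0 as HPI.
 destruct (Hc (eps/16) ltac:(lra)) as [eta0 [[He0 He01] Hge0]].
 set (eta := Rmin (eta0/2) (1/4)).
 assert (Heta : 0 < eta <= 1/4) by (unfold eta; split; [apply Rmin_pos; lra| apply Rmin_r]).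
 assert (Heta2 : 2 * eta <= eta0) by (unfold eta; pose proof (Rmin_l (eta0/2) (1/4)); lra).
 assert (Hg2 : g (2 * eta) <= eps / 16) by (pose proof (Hg (2*eta) eta0 ltac:(lra) Heta2 He01); lra).
 assert (Hg1 : g eta <= eps / 16) by (pose proof (Hg eta (2*eta) ltac:(lra) ltac:(lra) ltac:(lra)); lra).
 set (r := Rmin eta (eps / (32 * PI))).
 assert (Hr : 0 < r <= eta /\ r <= eps / (32 * PI)).
 { unfold r. split; [split|]. apply Rmin_pos. lra. apply Rdiv_lt_0_compat; lra. apply Rmin_l. apply Rmin_r. }
 set (c0 := cos (2 * PI * r)).
 assert (Hc0 : c0 < 1) by (apply cos_lt_1; nra).
 destruct (archimed_cor1 (eps * (1 - c0) / 64) ltac:(apply Rdiv_lt_0_compat; nra)) as [K [HK1 HK2]].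
 assert (HKp : 0 < INR K) by (apply lt_0_INR; lia).
 assert (HKe : 4 / (INR K * (1 - c0)) <= eps / 16).
 { replace (4 / (INR K * (1 - c0))) with (4 * / INR K / (1 - c0)) by (field; lra).
   apply Rle_trans with (4 * (eps * (1 - c0) / 64) / (1 - c0)).
   unfold Rdiv. apply Rmult_le_compat_r. left; apply Rinv_0_lt_compat; lra. lra.
   right. field. lra. }
 set (E := eps / (4 * INR K)).
 assert (HE : 0 < E) by (unfold E; apply Rdiv_lt_0_compat; lra).
 destruct (HDl (E/2) ltac:(lra)) as [M0 HM0].
 exists (2 * PI * (INR M0 + INR K + 1)). split. pose proof (pos_INR M0). nra.
 intros t al Ht.
 destruct (nat_floor (t / (2 * PI))) as [n [Hn1 Hn2]].
 { apply Rdiv_le_0_compat; [|lra]. pose proof (pos_INR M0). nra. }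
 assert (Hnb : (M0 + K <= n)%nat).
 { assert (INR M0 + INR K + 1 < t / (2 * PI)).
   { apply (Rmult_lt_reg_l (2 * PI)). lra. replace (2*PI * (t / (2*PI))) with t by (field; lra). lra. }
   assert (INR (M0 + K) < INR n + 1) by (rewrite plus_INR; lra).
   rewrite <- S_INR in H2. apply INR_lt in H2. lia. }
 set (s := t - 2 * PI * INR n).
 assert (Hs0 : 0 <= s < 2 * PI).
 { unfold s. assert (2 * PI * INR n <= t /\ t < 2 * PI * (INR n + 1)).
   { split; apply (Rmult_le_reg_r (/ (2 * PI))) || apply (Rmult_lt_reg_r (/ (2 * PI)));
     try (apply Rinv_0_lt_compat; lra); field_simplify; try lra;
     unfold Rdiv in *; lra. }
   lra. }
 set (psi := fun x => s * x + al).
 assert (HnK : 0 < INR n + INR K) by (pose proof (pos_INR n); lra).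
 destruct (small_inv eta ltac:(lra)) as [N1 [HN1 HN1']].
 destruct (small_inv (E / (8 * PI * (INR n + INR K))) ltac:(apply Rdiv_lt_0_compat; nra)) as [N2 [HN2 HN2']].
 exists (Nat.max N1 N2). intros N HN.
 assert (HN1N : / INR N < eta) by (apply HN1'; lia).
 assert (HN2N : / INR N < E / (8 * PI * (INR n + INR K))) by (apply HN2'; lia).
 assert (HNN : (1 <= N)%nat) by lia.
 assert (HNp : 0 < INR N) by (apply lt_0_INR; lia).
 assert (Hwin : forall m gm, (M0 <= m)%nat -> (m <= n + K)%nat ->
           Rabs (Lam g N (fun x => cos (2 * PI * INR m * x + gm))) <= E).
 { intros m gm Hm1 Hm2. eapply Rle_trans. apply Lam_cos_shift; auto.
   pose proof (HD m N HNN). pose proof (Lam_sym_sin g N m Hg H0 H1 Hs HNN).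
   pose proof (HM0 m Hm1).
   assert (INR m <= INR n + INR K) by (rewrite <- plus_INR; apply le_INR; auto).
   assert (2 * PI * INR m / INR N <= E / 4).
   { unfold Rdiv. apply Rle_trans with (2 * PI * (INR n + INR K) * (E / (8 * PI * (INR n + INR K)))).
     apply Rmult_le_compat. pose proof (pos_INR m); nra. left; apply Rinv_0_lt_compat; lra. nra. lra.
     right. field. lra. }
   assert (Rabs (Lam g N (fun x : R => cos (2 * PI * INR m * x))) <= E / 2 + E / 4).
   { replace (Lam g N (fun x : R => cos (2 * PI * INR m * x))) with
       ((Lam g N (fun x : R => cos (2 * PI * INR m * x)) - D m) + D m) by ring.
     eapply Rle_trans. apply Rabs_triang. lra. }
   lra. }
 set (Tc := Tf K (fun y => cos (psi y))). set (Ts := Tf K (fun y => sin (psi y))).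
 assert (Hlc : lip (fun y => cos (psi y)) (2 * PI)).
 { apply lip_weak with (Rabs s). apply lip_cos. rewrite Rabs_pos_eq; lra. }
 assert (Hls : lip (fun y => sin (psi y)) (2 * PI)).
 { apply lip_weak with (Rabs s). apply lip_sin. rewrite Rabs_pos_eq; lra. }
 assert (Hbc : forall y, 0 <= y <= 1 -> Rabs (cos (psi y)) <= 1).
 { intros. pose proof (COS_bound (psi y)). unfold Rabs; destruct Rcase_abs; lra. }
 assert (Hbs : forall y, 0 <= y <= 1 -> Rabs (sin (psi y)) <= 1).
 { intros. pose proof (SIN_bound (psi y)). unfold Rabs; destruct Rcase_abs; lra. }
 set (App := fun x => cos (2 * PI * INR n * x) * Tc x - sin (2 * PI * INR n * x) * Ts x).
 set (B := fun x => eps / 4 + 4 * indL eta x + 4 * indR (1 - eta) x).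
 assert (Hsplit : Lam g N (fun x => cos (t * x + al)) = Lam g N App + Lam g N (fun x => cos (t * x + al) - App x)).
 { rewrite Lam_minus. ring. }
 assert (HApp : Rabs (Lam g N App) <= eps / 4).
 { rewrite (Lam_ext g N App (fun x => / INR K * rsum K (fun j => / INR K * rsum K (fun k => rsum K (fun l => hh n K psi j k l x))))).
   2: auto.
   2:{ intros x _. unfold App, Tc, Ts. apply App_eq; lia. }
   eapply Rle_trans. apply (Lam_triple g N K _ E). lia.
   - intros j k l Hj Hk Hl. unfold hh. rewrite Lam_scal.
     rewrite (Lam_plus g N (fun x => cos (2 * PI * INR (n + k - l) * x + (psi (INR j / INR K) - (INR k - INR l) * (2 * PI * (INR j / INR K)))))
        (fun x => cos (2 * PI * INR (n + l - k) * x + (psi (INR j / INR K) + (INR k - INR l) * (2 * PI * (INR j / INR K)))))).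
     rewrite Rabs_mult, Rabs_pos_eq by lra.
     eapply Rle_trans. apply Rmult_le_compat_l. lra. apply Rabs_triang.
     assert (Rabs (Lam g N (fun x => cos (2 * PI * INR (n + k - l) * x + (psi (INR j / INR K) - (INR k - INR l) * (2 * PI * (INR j / INR K)))))) <= E)
       by (apply Hwin; lia).
     assert (Rabs (Lam g N (fun x => cos (2 * PI * INR (n + l - k) * x + (psi (INR j / INR K) + (INR k - INR l) * (2 * PI * (INR j / INR K)))))) <= E)
       by (apply Hwin; lia).
     lra.
   - unfold E. right. field. lra. }
 assert (Herr : Rabs (Lam g N (fun x => cos (t * x + al) - App x)) <= Lam g N B).
 { apply Lam_le; auto. intros x Hx.
   assert (Ex : cos (t * x + al) - App x = cos (2 * PI * INR n * x) * (cos (psi x) - Tc x) - sin (2 * PI * INR n * x) * (sin (psi x) - Ts x)).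
   { unfold App, psi. replace (t * x + al) with (2 * PI * INR n * x + (s * x + al)) by (unfold s; ring).
     rewrite cos_plus. ring. }
   rewrite Ex.
   assert (Hgen : Rabs (cos (2 * PI * INR n * x) * (cos (psi x) - Tc x) - sin (2 * PI * INR n * x) * (sin (psi x) - Ts x))
            <= Rabs (cos (psi x) - Tc x) + Rabs (sin (psi x) - Ts x)).
   { eapply Rle_trans. apply Rabs_sub. rewrite !Rabs_mult.
     pose proof (COS_bound (2 * PI * INR n * x)). pose proof (SIN_bound (2 * PI * INR n * x)).
     assert (Rabs (cos (2 * PI * INR n * x)) <= 1) by (unfold Rabs; destruct Rcase_abs; lra).
     assert (Rabs (sin (2 * PI * INR n * x)) <= 1) by (unfold Rabs; destruct Rcase_abs; lra).
     pose proof (Rabs_pos (cos (psi x) - Tc x)). pose proof (Rabs_pos (sin (psi x) - Ts x)). nra. }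
   eapply Rle_trans. apply Hgen.
   assert (0 <= indL eta x) by (unfold indL; destruct Rlt_dec; lra).
   assert (0 <= indR (1 - eta) x) by (unfold indR; destruct Rlt_dec; lra).
   unfold B. destruct (Rlt_dec x eta) as [Hx1|Hx1].
   - replace (indL eta x) with 1 by (unfold indL; destruct Rlt_dec; lra).
     pose proof (T_bound K (fun y => cos (psi y)) x ltac:(lia) Hbc).
     pose proof (T_bound K (fun y => sin (psi y)) x ltac:(lia) Hbs).
     pose proof (Hbc x Hx). pose proof (Hbs x Hx). fold Tc Ts in H3, H4.
     pose proof (Rabs_sub (cos (psi x)) (Tc x)). pose proof (Rabs_sub (sin (psi x)) (Ts x)). lra.
   - destruct (Rlt_dec (1 - eta) x) as [Hx2|Hx2].
     + replace (indR (1 - eta) x) with 1 by (unfold indR; destruct Rlt_dec; lra).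
       pose proof (T_bound K (fun y => cos (psi y)) x ltac:(lia) Hbc).
       pose proof (T_bound K (fun y => sin (psi y)) x ltac:(lia) Hbs).
       pose proof (Hbc x Hx). pose proof (Hbs x Hx). fold Tc Ts in H3, H4.
       pose proof (Rabs_sub (cos (psi x)) (Tc x)). pose proof (Rabs_sub (sin (psi x)) (Ts x)). lra.
     + pose proof (T_approx K (fun y => cos (psi y)) (2 * PI) r eta x ltac:(lia) ltac:(lra) ltac:(lra) ltac:(lra)
          ltac:(lra) ltac:(lra) Hlc Hbc).
       pose proof (T_approx K (fun y => sin (psi y)) (2 * PI) r eta x ltac:(lia) ltac:(lra) ltac:(lra) ltac:(lra)
          ltac:(lra) ltac:(lra) Hls Hbs).
       fold c0 Tc Ts in H3, H4.
       assert (2 * PI * r <= eps / 16).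
       { apply Rle_trans with (2 * PI * (eps / (32 * PI))). apply Rmult_le_compat_l; lra. right; field; lra. }
       lra. }
 assert (HB : Lam g N B <= 3 * eps / 4).
 { unfold B.
   rewrite (Lam_plus g N (fun x => eps / 4 + 4 * indL eta x) (fun x => 4 * indR (1 - eta) x)).
   rewrite (Lam_plus g N (fun _ => eps / 4) (fun x => 4 * indL eta x)).
   rewrite Lam_const, !Lam_scal by auto.
   pose proof (Lam_indL g N eta Hg HNN ltac:(lra) ltac:(lra)) as L1.
   pose proof (Lam_indR g N (1 - eta) Hg HNN ltac:(lra)) as L2.
   rewrite Hs in L2 by lra. rewrite H0, H1 in *.
   assert (0 < / INR N) by (apply Rinv_0_lt_compat; lra).
   assert (g (eta + / INR N) <= g (2 * eta)) by (apply Hg; lra).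
   lra. }
 rewrite Hsplit. eapply Rle_trans. apply Rabs_triang. lra. Qed.
Lemma fst_norm (z : C) : Rabs (fst z) <= @norm _ C_R_NormedModule z.
Proof. destruct z as [a b]. change (@norm _ C_R_NormedModule (a,b)) with (sqrt (Rabs a ^ 2 + Rabs b ^ 2)).
 simpl fst. rewrite <- (sqrt_pow2 (Rabs a)) at 1 by apply Rabs_pos. apply sqrt_le_1_alt.
 pose proof (pow2_ge_0 (Rabs b)). lra. Qed.
Lemma snd_norm (z : C) : Rabs (snd z) <= @norm _ C_R_NormedModule z.
Proof. destruct z as [a b]. change (@norm _ C_R_NormedModule (a,b)) with (sqrt (Rabs a ^ 2 + Rabs b ^ 2)).
 simpl snd. rewrite <- (sqrt_pow2 (Rabs b)) at 1 by apply Rabs_pos. apply sqrt_le_1_alt.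
 pose proof (pow2_ge_0 (Rabs a)). lra. Qed.
Lemma fst_sum (u : nat -> C) n : fst (@sum_n C_R_NormedModule u n) = sum_n (fun i => fst (u i)) n.
Proof. induction n. rewrite !sum_O. reflexivity. rewrite !sum_Sn. simpl. rewrite <- IHn. reflexivity. Qed.
Lemma snd_sum (u : nat -> C) n : snd (@sum_n C_R_NormedModule u n) = sum_n (fun i => snd (u i)) n.
Proof. induction n. rewrite !sum_O. reflexivity. rewrite !sum_Sn. simpl. rewrite <- IHn. reflexivity. Qed.
Lemma Cmod_le (z : C) : Cmod z <= Rabs (fst z) + Rabs (snd z).
Proof. destruct z as [a b]. unfold Cmod. simpl fst; simpl snd.
 pose proof (Rabs_pos a); pose proof (Rabs_pos b).
 rewrite <- (sqrt_pow2 (Rabs a + Rabs b)) by lra. apply sqrt_le_1_alt.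
 rewrite <- (pow2_abs a), <- (pow2_abs b). nra. Qed.

Lemma RS_fst f g a b I : is_RS_integral (V := C_R_NormedModule) f g a b I ->
  is_RS_integral (V := R_NormedModule) (fun x => fst (f x)) g a b (fst I).
Proof. intros H eps. destruct (H eps) as [d Hd]. exists d. intros n p xi P0 P1 P2.
 specialize (Hd n p xi P0 P1 P2). eapply Rle_lt_trans; [|apply Hd].
 change (Rabs (sum_n (fun i => (g (p (S i)) - g (p i)) * fst (f (xi i))) (pred n) - fst I) <=
   norm (minus (sum_n (fun i => scal (g (p (S i)) - g (p i)) (f (xi i))) (pred n)) I)).
 eapply Rle_trans; [|apply fst_norm]. right. f_equal.
 set (S := sum_n (fun i => scal (g (p (S i)) - g (p i)) (f (xi i))) (pred n)).
 match goal with |- _ = ?X => change X with (fst S - fst I) end. unfold S. rewrite fst_sum. reflexivity. Qed.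

Lemma RS_snd f g a b I : is_RS_integral (V := C_R_NormedModule) f g a b I ->
  is_RS_integral (V := R_NormedModule) (fun x => snd (f x)) g a b (snd I).
Proof. intros H eps. destruct (H eps) as [d Hd]. exists d. intros n p xi P0 P1 P2.
 specialize (Hd n p xi P0 P1 P2). eapply Rle_lt_trans; [|apply Hd].
 change (Rabs (sum_n (fun i => (g (p (S i)) - g (p i)) * snd (f (xi i))) (pred n) - snd I) <=
   norm (minus (sum_n (fun i => scal (g (p (S i)) - g (p i)) (f (xi i))) (pred n)) I)).
 eapply Rle_trans; [|apply snd_norm]. right. f_equal.
 set (S := sum_n (fun i => scal (g (p (S i)) - g (p i)) (f (xi i))) (pred n)).
 match goal with |- _ = ?X => change X with (snd S - snd I) end. unfold S. rewrite snd_sum. reflexivity. Qed.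

Lemma Cpow_eq k x : Cpow (Cmult Ci (RtoC x)) k = (x ^ k * cos (INR k * (PI / 2)), x ^ k * sin (INR k * (PI / 2))).
Proof. induction k.
 - simpl. rewrite Rmult_0_l, cos_0, sin_0. apply injective_projections; simpl; ring.
 - simpl Cpow. rewrite IHk. rewrite S_INR.
   replace ((INR k + 1) * (PI / 2)) with (INR k * (PI / 2) + PI / 2) by ring.
   rewrite cos_plus, sin_plus, cos_PI2, sin_PI2.
   apply injective_projections; simpl; ring. Qed.

Lemma integrand_eq k t x : Cmult (Cpow (Cmult Ci (RtoC x)) k) (cis (t * x)) =
  (x ^ k * cos (t * x + INR k * (PI / 2)), x ^ k * sin (t * x + INR k * (PI / 2))).
Proof. rewrite Cpow_eq. unfold cis. rewrite cos_plus, sin_plus.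
 apply injective_projections; simpl; ring. Qed.

Definition Pj g j := forall eps, 0 < eps -> exists T, forall t al, T < Rabs t -> exists N0, forall N, (N0 <= N)%nat ->
  Rabs (Lam g N (fun x => x ^ j * cos (t * x + al))) <= eps.

Lemma pow_01 x j : 0 <= x <= 1 -> 0 <= x ^ j <= 1.
Proof. intros Hx. induction j; simpl. lra. nra. Qed.

Lemma P0 g D : mono g -> g 0 = 0 -> g 1 = 1 -> (forall x, 0 <= x <= 1 -> g (1 - x) = 1 - g x) ->
  (forall e, 0 < e -> exists eta, 0 < eta <= 1 /\ g eta <= e) ->
  (forall m N, (1 <= N)%nat -> Rabs (Lam g N (fun x => cos (2 * PI * INR m * x)) - D m) <= 2 * PI * INR m / INR N) ->
  (forall e, 0 < e -> exists M, forall m, (M <= m)%nat -> Rabs (D m) <= e) -> Pj g 0.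
Proof. intros Hg H0 H1 Hs Hc HD HDl eps Heps.
 destruct (C0pos g D Hg H0 H1 Hs Hc HD HDl eps Heps) as [T [HT HTt]]. exists T. intros t al Ht.
 destruct (Rle_dec 0 t).
 - rewrite Rabs_pos_eq in Ht by auto. destruct (HTt t al Ht) as [N0 HN0]. exists (Nat.max N0 1). intros N HN.
   rewrite (Lam_ext g N _ (fun x => cos (t * x + al))) by (lia || (intros; simpl; ring)). apply HN0; lia.
 - rewrite Rabs_left in Ht by lra. destruct (HTt (-t) (-al) Ht) as [N0 HN0]. exists (Nat.max N0 1). intros N HN.
   rewrite (Lam_ext g N _ (fun x => cos (- t * x + - al))). apply HN0; lia. lia.
   intros. simpl. rewrite Rmult_1_l, cos_sym. f_equal; ring. Qed.

Lemma Pstep g j : mono g -> g 0 = 0 -> g 1 = 1 -> Pj g j -> Pj g (S j).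
Proof. intros Hg H0 H1 IH eps Heps.
 set (h := Rmin 1 (eps / 4)).
 assert (Hh : 0 < h <= 1 /\ h <= eps / 4) by (unfold h; split; [split; [apply Rmin_pos; lra| apply Rmin_l]| apply Rmin_r]).
 destruct (IH (h * eps / 4) ltac:(nra)) as [T HT]. exists (T + 1). intros t al Ht.
 set (be := al + PI / 2).
 assert (Ht1 : T < Rabs (t + h)) by (unfold Rabs in *; repeat destruct Rcase_abs; lra).
 assert (Ht2 : T < Rabs t) by lra.
 destruct (HT (t + h) be Ht1) as [N1 HN1]. destruct (HT t be Ht2) as [N2 HN2].
 exists (Nat.max (Nat.max N1 N2) 1). intros N HN. assert (HNN : (1 <= N)%nat) by lia.
 set (e := fun x => cos (t * x + be) * (cos (h * x) - 1) - sin (t * x + be) * (sin (h * x) - h * x)).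
 assert (Key : h * Lam g N (fun x => x ^ S j * cos (t * x + al)) =
    Lam g N (fun x => x ^ j * cos (t * x + be)) - Lam g N (fun x => x ^ j * cos ((t + h) * x + be)) + Lam g N (fun x => x ^ j * e x)).
 { rewrite <- Lam_minus, <- Lam_plus, <- Lam_scal. apply Lam_ext; auto. intros x Hx.
   unfold e. replace ((t + h) * x + be) with ((t * x + be) + h * x) by ring.
   rewrite (cos_plus (t * x + be) (h * x)).
   replace (cos (t * x + al)) with (sin (t * x + be)).
   2:{ unfold be. replace (t * x + (al + PI / 2)) with ((t * x + al) + PI / 2) by ring.
       rewrite sin_plus, cos_PI2, sin_PI2. ring. }
   simpl. ring. }
 assert (He : Rabs (Lam g N (fun x => x ^ j * e x)) <= 2 * (h * h)).
 { eapply Rle_trans. apply (Lam_le g N _ (fun _ => 2 * (h * h))); auto.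
   - intros x Hx. pose proof (pow_01 x j Hx). rewrite Rabs_mult, (Rabs_pos_eq (x ^ j)) by lra.
     assert (Hd : 0 <= h * x <= 1) by nra.
     pose proof (cos_small (h * x) Hd). pose proof (sin_small (h * x) Hd).
     assert (Rabs (e x) <= 2 * (h * h)).
     { unfold e. eapply Rle_trans. apply Rabs_sub. rewrite !Rabs_mult.
       pose proof (COS_bound (t * x + be)). pose proof (SIN_bound (t * x + be)).
       assert (Rabs (cos (t * x + be)) <= 1) by (unfold Rabs; destruct Rcase_abs; lra).
       assert (Rabs (sin (t * x + be)) <= 1) by (unfold Rabs; destruct Rcase_abs; lra).
       assert (h * x <= h) by nra. assert (h * x * (h * x) <= h * h) by (apply Rmult_le_compat; lra).
       pose proof (Rabs_pos (cos (t * x + be))). pose proof (Rabs_pos (sin (t * x + be))).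
       pose proof (Rabs_pos (cos (h * x) - 1)). pose proof (Rabs_pos (sin (h * x) - h * x)).
       nra. }
     pose proof (Rabs_pos (e x)). nra.
   - rewrite Lam_const by auto. rewrite H0, H1. lra. }
 pose proof (HN1 N ltac:(lia)). pose proof (HN2 N ltac:(lia)).
 assert (Habs : h * Rabs (Lam g N (fun x => x ^ S j * cos (t * x + al))) <= h * eps / 4 + h * eps / 4 + 2 * (h * h)).
 { rewrite <- (Rabs_pos_eq h) at 1 by lra. rewrite <- Rabs_mult, Key.
   eapply Rle_trans. apply Rabs_triang. pose proof (Rabs_sub (Lam g N (fun x => x ^ j * cos (t * x + be)))
     (Lam g N (fun x => x ^ j * cos ((t + h) * x + be)))). lra. }
 apply (Rmult_le_reg_l h). lra. nra. Qed.

Lemma lip_ext f h L : (forall x, f x = h x) -> lip f L -> lip h L.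
Proof. intros E H x y Hx Hy. rewrite <- !E. auto. Qed.

Lemma pow_lip k x y : 0 <= x <= 1 -> 0 <= y <= 1 -> Rabs (x ^ k - y ^ k) <= INR k * Rabs (x - y).
Proof. intros Hx Hy. induction k. simpl. rewrite Rminus_diag, Rabs_R0. lra.
 rewrite S_INR. simpl. replace (x * x ^ k - y * y ^ k) with (x * (x ^ k - y ^ k) + y ^ k * (x - y)) by ring.
 eapply Rle_trans. apply Rabs_triang. rewrite !Rabs_mult, (Rabs_pos_eq x), (Rabs_pos_eq (y ^ k)) by (try lra; apply pow_01; lra).
 pose proof (pow_01 y k Hy). pose proof (Rabs_pos (x ^ k - y ^ k)). pose proof (Rabs_pos (x - y)). nra. Qed.

Lemma lip_main k t al : lip (fun x => x ^ k * cos (t * x + al)) (INR k + Rabs t).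
Proof. intros x y Hx Hy.
 replace (x ^ k * cos (t * x + al) - y ^ k * cos (t * y + al)) with
   ((x ^ k - y ^ k) * cos (t * x + al) + y ^ k * (cos (t * x + al) - cos (t * y + al))) by ring.
 eapply Rle_trans. apply Rabs_triang. rewrite !Rabs_mult.
 pose proof (pow_lip k x y Hx Hy). pose proof (pow_01 y k Hy).
 pose proof (lip_cos t al x y Hx Hy). simpl in H1.
 pose proof (COS_bound (t * x + al)). assert (Rabs (cos (t * x + al)) <= 1) by (unfold Rabs; destruct Rcase_abs; lra).
 rewrite (Rabs_pos_eq (y ^ k)) by lra.
 pose proof (Rabs_pos (cos (t * x + al))). pose proof (Rabs_pos (x ^ k - y ^ k)). pose proof (Rabs_pos (x - y)).
 pose proof (Rabs_pos (cos (t * x + al) - cos (t * y + al))). nra. Qed.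

Lemma main_generic g : mono g -> g 0 = 0 -> g 1 = 1 -> (forall x, 0 <= x <= 1 -> g (1 - x) = 1 - g x) ->
  (forall e, 0 < e -> exists eta, 0 < eta <= 1 /\ g eta <= e) ->
  forall k : nat,
  (forall d : nat -> R,
     (forall n : nat,
        is_RS_integral (V := R_NormedModule)
          (fun x => cos (2 * PI * INR n * x)) g 0 1 (d n)) ->
     is_lim_seq d 0) ->
  forall F : R -> C,
    (forall t : R,
       is_RS_integral (V := C_R_NormedModule)
         (fun x => Cmult (Cpow (Cmult Ci (RtoC x)) k) (cis (t * x)))
         g 0 1 (F t)) ->
    forall eps : posreal, exists T : R,
      forall t : R, T < Rabs t -> Cmod (F t) < eps.
Proof. intros Hg H0 H1 Hs Hc k Hsal F HF eps.
 assert (Hlc : forall m, lip (fun x => cos (2 * PI * INR m * x)) (2 * PI * INR m)).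
 { intros m. apply lip_ext with (fun x => cos (2 * PI * INR m * x + 0)). intros; f_equal; ring.
   pose proof (lip_cos (2 * PI * INR m) 0) as L0. rewrite Rabs_pos_eq in L0. exact L0.
   pose proof PI_RGT_0; pose proof (pos_INR m); nra. }
 assert (Hlp : forall m, 0 <= 2 * PI * INR m) by (intros; pose proof PI_RGT_0; pose proof (pos_INR m); nra).
 assert (Hex : forall m, exists I, is_RS_integral (V := R_NormedModule) (fun x => cos (2 * PI * INR m * x)) g 0 1 I).
 { intros m. apply (exist_RS g _ (2 * PI * INR m)); auto. }
 set (D := fun m => proj1_sig (ClassicalEpsilon.constructive_indefinite_description _ (Hex m))).
 assert (HDi : forall m, is_RS_integral (V := R_NormedModule) (fun x => cos (2 * PI * INR m * x)) g 0 1 (D m)).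
 { intros m. unfold D. destruct ClassicalEpsilon.constructive_indefinite_description. auto. }
 assert (HDl : forall e, 0 < e -> exists M, forall m, (M <= m)%nat -> Rabs (D m) <= e).
 { intros e He. pose proof (Hsal D HDi) as HL. apply is_lim_seq_spec in HL. destruct (HL (mkposreal e He)) as [M HM].
   exists M. intros m Hm. specialize (HM m Hm). simpl in HM. rewrite Rminus_0_r in HM. lra. }
 assert (HD : forall m N, (1 <= N)%nat -> Rabs (Lam g N (fun x => cos (2 * PI * INR m * x)) - D m) <= 2 * PI * INR m / INR N).
 { intros m N HN. eapply Rle_trans. apply (CL g _ (2 * PI * INR m)); auto. rewrite H0, H1. right. unfold Rdiv. ring. }
 assert (HP : forall j, Pj g j).
 { induction j. apply (P0 g D); auto. apply Pstep; auto. }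
 destruct (HP k (eps / 8) ltac:(pose proof (cond_pos eps); lra)) as [T HT].
 exists T. intros t Ht.
 set (a1 := INR k * (PI / 2)). set (a2 := INR k * (PI / 2) - PI / 2).
 assert (HF1 : is_RS_integral (V := R_NormedModule) (fun x => x ^ k * cos (t * x + a1)) g 0 1 (fst (F t))).
 { pose proof (RS_fst _ _ _ _ _ (HF t)) as R1.
   replace (fun x => x ^ k * cos (t * x + a1)) with (fun x => fst (Cmult (Cpow (Cmult Ci (RtoC x)) k) (cis (t * x)))).
   auto. apply FunctionalExtensionality.functional_extensionality. intros x. rewrite integrand_eq. reflexivity. }
 assert (HF2 : is_RS_integral (V := R_NormedModule) (fun x => x ^ k * cos (t * x + a2)) g 0 1 (snd (F t))).
 { pose proof (RS_snd _ _ _ _ _ (HF t)) as R1.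
   replace (fun x => x ^ k * cos (t * x + a2)) with (fun x => snd (Cmult (Cpow (Cmult Ci (RtoC x)) k) (cis (t * x)))).
   auto. apply FunctionalExtensionality.functional_extensionality. intros x. rewrite integrand_eq. simpl.
   unfold a2. replace (t * x + (INR k * (PI / 2) - PI / 2)) with ((t * x + INR k * (PI / 2)) - PI / 2) by ring.
   rewrite cos_minus, cos_PI2, sin_PI2. ring. }
 destruct (HT t a1 Ht) as [N1 HN1]. destruct (HT t a2 Ht) as [N2 HN2].
 set (L := INR k + Rabs t).
 assert (HL : 0 <= L) by (unfold L; pose proof (pos_INR k); pose proof (Rabs_pos t); lra).
 destruct (small_inv (eps / (8 * (L + 1))) ltac:(apply Rdiv_lt_0_compat; [apply cond_pos| lra])) as [N3 [HN3 HN3']].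
 set (N := Nat.max (Nat.max N1 N2) N3).
 assert (HNN : (1 <= N)%nat) by (unfold N; lia).
 assert (HLN : L * / INR N * (g 1 - g 0) <= eps / 8).
 { rewrite H0, H1. assert (/ INR N < eps / (8 * (L + 1))) by (apply HN3'; unfold N; lia).
   assert (0 < / INR N) by (apply Rinv_0_lt_compat, lt_0_INR; lia).
   apply Rle_trans with ((L + 1) * (eps / (8 * (L + 1)))). nra. right. field. lra. }
 pose proof (CL g _ L _ N Hg (lip_main k t a1) HL HNN HF1).
 pose proof (CL g _ L _ N Hg (lip_main k t a2) HL HNN HF2).
 pose proof (HN1 N ltac:(unfold N; lia)). pose proof (HN2 N ltac:(unfold N; lia)).
 assert (Rabs (fst (F t)) <= eps / 4).
 { replace (fst (F t)) with (Lam g N (fun x => x ^ k * cos (t * x + a1)) - (Lam g N (fun x => x ^ k * cos (t * x + a1)) - fst (F t))) by ring.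
   eapply Rle_trans. apply Rabs_sub. lra. }
 assert (Rabs (snd (F t)) <= eps / 4).
 { replace (snd (F t)) with (Lam g N (fun x => x ^ k * cos (t * x + a2)) - (Lam g N (fun x => x ^ k * cos (t * x + a2)) - snd (F t))) by ring.
   eapply Rle_trans. apply Rabs_sub. lra. }
 eapply Rle_lt_trans. apply Cmod_le. pose proof (cond_pos eps). lra. Qed.

Lemma cf_rem_S x i : cf_rem x (S i) = cf_rem (gauss_map x) i.
Proof. induction i. reflexivity. simpl in *. rewrite IHi. reflexivity. Qed.

Lemma cf_digit_S x i : cf_digit x (S i) = cf_digit (gauss_map x) i.
Proof. unfold cf_digit. rewrite cf_rem_S. reflexivity. Qed.

Lemma cf_digit_sum_S x i : cf_digit_sum x (S i) = (cf_digit x 0 + cf_digit_sum (gauss_map x) i)%nat.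
Proof. induction i. simpl. rewrite cf_digit_S. reflexivity.
 change (cf_digit_sum x (S (S i))) with (cf_digit_sum x (S i) + cf_digit x (S (S i)))%nat.
 rewrite IHi, cf_digit_S. simpl. lia. Qed.

Lemma term_S x i : minkowski_term x (S i) = - (/ 2) ^ (cf_digit x 0) * minkowski_term (gauss_map x) i.
Proof. unfold minkowski_term. rewrite cf_rem_S. destruct Req_EM_T. ring.
 rewrite cf_digit_sum_S, pow_add. simpl. ring. Qed.

Lemma term_0 x : x <> 0 -> minkowski_term x 0 = 2 * (/ 2) ^ (cf_digit x 0).
Proof. intros H. unfold minkowski_term. simpl. destruct Req_EM_T. contradiction. ring. Qed.

Lemma Int_part_ge1 y : 1 <= y -> (1 <= Int_part y)%Z.
Proof. intros H. destruct (base_Int_part y). assert (0 < Int_part y)%Z by (apply lt_IZR; lra). lia. Qed.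

Lemma gauss_eq x : x <> 0 -> gauss_map x = / x - IZR (Int_part (/ x)).
Proof. intros H. unfold gauss_map. destruct Req_EM_T. contradiction. reflexivity. Qed.

Lemma digit0_eq x : x <> 0 -> cf_digit x 0 = Z.to_nat (Int_part (/ x)).
Proof. intros H. unfold cf_digit. simpl. destruct Req_EM_T. contradiction. reflexivity. Qed.

Lemma gauss_range x : 0 < x <= 1 -> 0 <= gauss_map x < 1.
Proof. intros Hx. rewrite gauss_eq by lra. destruct (base_Int_part (/ x)). lra. Qed.

Lemma digit0_INR x : 0 < x <= 1 -> INR (cf_digit x 0) = IZR (Int_part (/ x)) /\ (1 <= cf_digit x 0)%nat.
Proof. intros Hx. rewrite digit0_eq by lra.
 assert (1 <= / x) by (rewrite <- Rinv_1; apply Rinv_le_contravar; lra).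
 pose proof (Int_part_ge1 _ H). split. rewrite INR_IZR_INZ, Z2Nat.id by lia. auto. lia. Qed.

Lemma rem_range x i : 0 <= x <= 1 -> 0 <= cf_rem x i <= 1.
Proof. intros Hx. induction i. simpl; auto. simpl.
 destruct (Req_dec (cf_rem x i) 0) as [E|E].
 - rewrite E. unfold gauss_map. destruct Req_EM_T; lra.
 - pose proof (gauss_range (cf_rem x i) ltac:(lra)). lra. Qed.

Lemma rem_zero_S x i : cf_rem x i = 0 -> cf_rem x (S i) = 0.
Proof. intros H. simpl. rewrite H. unfold gauss_map. destruct Req_EM_T; lra. Qed.

Lemma digit_sum_bound x i : 0 <= x <= 1 -> cf_rem x i <> 0 -> (S i <= cf_digit_sum x i)%nat.
Proof. intros Hx. induction i; intros H.
 - simpl. unfold cf_digit. destruct Req_EM_T. contradiction.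
   pose proof (rem_range x 0 Hx). simpl in H0.
   assert (1 <= / cf_rem x 0) by (rewrite <- Rinv_1; apply Rinv_le_contravar; simpl in *; lra).
   pose proof (Int_part_ge1 _ H1). lia.
 - assert (cf_rem x i <> 0) by (intro E; apply H; apply rem_zero_S; auto).
   specialize (IHi H0). simpl. unfold cf_digit. destruct Req_EM_T. contradiction.
   pose proof (rem_range x (S i) Hx).
   assert (1 <= / cf_rem x (S i)) by (rewrite <- Rinv_1; apply Rinv_le_contravar; lra).
   pose proof (Int_part_ge1 _ H2). lia. Qed.

Lemma half_pow_le n m : (n <= m)%nat -> (/ 2) ^ m <= (/ 2) ^ n.
Proof. intros H. replace m with (n + (m - n))%nat by lia. rewrite pow_add.
 assert (0 < (/ 2) ^ n) by (apply pow_lt; lra).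
 pose proof (pow_01 (/ 2) (m - n) ltac:(lra)). nra. Qed.

Lemma term_bound x i : 0 <= x <= 1 -> Rabs (minkowski_term x i) <= (/ 2) ^ i.
Proof. intros Hx. unfold minkowski_term. destruct Req_EM_T.
 rewrite Rabs_R0. apply pow_le; lra.
 pose proof (digit_sum_bound x i Hx n). pose proof (half_pow_le _ _ H).
 rewrite !Rabs_mult, pow_1_abs. rewrite (Rabs_pos_eq 2) by lra.
 rewrite (Rabs_pos_eq ((/ 2) ^ cf_digit_sum x i)) by (apply pow_le; lra). simpl in H0. lra. Qed.

Lemma geom_half : is_series (fun n => (/ 2) ^ n) 2.
Proof. pose proof (is_series_geom (/ 2) ltac:(rewrite Rabs_pos_eq; lra)).
 replace (/ (1 - / 2)) with 2 in H by field. exact H. Qed.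

Lemma mk_ex x : 0 <= x <= 1 -> ex_series (minkowski_term x).
Proof. intros Hx. apply (@ex_series_le R_AbsRing R_CompleteNormedModule _ (fun n => (/ 2) ^ n)). intros n. apply term_bound; auto.
 exists 2. apply geom_half. Qed.

Lemma mk_abs x : 0 <= x <= 1 -> Rabs (minkowski x) <= 2.
Proof. intros Hx. unfold minkowski. eapply Rle_trans. apply Series_Rabs.
 apply (@ex_series_le R_AbsRing R_CompleteNormedModule _ (fun n => (/ 2) ^ n)). intros n. rewrite Rabs_Rabsolu. apply term_bound; auto. exists 2. apply geom_half.
 rewrite <- (is_series_unique _ _ geom_half). apply Series_le. intros n. split. apply Rabs_pos. apply term_bound; auto.
 exists 2. apply geom_half. Qed.

Lemma mk_rec x : 0 < x <= 1 -> minkowski x = (/ 2) ^ (cf_digit x 0) * (2 - minkowski (gauss_map x)).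
Proof. intros Hx. unfold minkowski. rewrite Series_incr_1 by (apply mk_ex; lra).
 rewrite term_0 by lra.
 rewrite (Series_ext _ (fun k => (- (/ 2) ^ (cf_digit x 0)) * minkowski_term (gauss_map x) k)) by (intros; apply term_S).
 rewrite Series_scal_l. ring. Qed.

Lemma mk_0 : minkowski 0 = 0.
Proof. unfold minkowski. assert (E : forall i, cf_rem 0 i = 0).
 { induction i. reflexivity. apply rem_zero_S; auto. }
 rewrite (Series_ext _ (fun n => 0 * minkowski_term 0 n)). rewrite Series_scal_l. ring.
 intros n. unfold minkowski_term. destruct Req_EM_T. ring. exfalso. apply n0. apply E. Qed.

Lemma mk_range x : 0 <= x <= 1 -> 0 <= minkowski x <= 1.
Proof. intros Hx. destruct (Req_dec x 0) as [E|E]. subst; rewrite mk_0; lra.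
 assert (H2 : forall y, 0 <= y <= 1 -> 0 <= minkowski y <= 2).
 { intros y Hy. destruct (Req_dec y 0) as [Ey|Ey]. subst; rewrite mk_0; lra.
   rewrite mk_rec by lra. pose proof (gauss_range y ltac:(lra)).
   pose proof (mk_abs (gauss_map y) ltac:(lra)). destruct (digit0_INR y ltac:(lra)) as [_ Hd].
   pose proof (half_pow_le 1 _ Hd). assert (0 < (/ 2) ^ (cf_digit y 0)) by (apply pow_lt; lra).
   simpl in H1. unfold Rabs in H0; destruct Rcase_abs in H0; split; nra. }
 rewrite mk_rec by lra. pose proof (gauss_range x ltac:(lra)).
 pose proof (H2 (gauss_map x) ltac:(lra)). destruct (digit0_INR x ltac:(lra)) as [_ Hd].
 pose proof (half_pow_le 1 _ Hd). assert (0 < (/ 2) ^ (cf_digit x 0)) by (apply pow_lt; lra).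
 simpl in H1. split; nra. Qed.

Lemma mk_bounds x : 0 < x <= 1 -> (/ 2) ^ (cf_digit x 0) <= minkowski x <= 2 * (/ 2) ^ (cf_digit x 0).
Proof. intros Hx. rewrite mk_rec by lra. pose proof (gauss_range x Hx).
 pose proof (mk_range (gauss_map x) ltac:(lra)). assert (0 < (/ 2) ^ (cf_digit x 0)) by (apply pow_lt; lra).
 split; nra. Qed.

Lemma mk_1 : minkowski 1 = 1.
Proof. rewrite mk_rec by lra. rewrite digit0_eq by lra. rewrite gauss_eq by lra. rewrite Rinv_1.
 assert (E : Int_part 1 = 1%Z) by (pose proof (Int_part_INR 1) as E; simpl in E; exact E).
 rewrite E. simpl Z.to_nat. replace (1 - IZR 1) with 0 by (simpl; ring). rewrite mk_0. simpl. field. Qed.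

Lemma Int_part_mono r1 r2 : r1 <= r2 -> (Int_part r1 <= Int_part r2)%Z.
Proof. intros H. destruct (base_Int_part r1). destruct (base_Int_part r2).
 assert (IZR (Int_part r1) < IZR (Int_part r2 + 1)) by (rewrite plus_IZR; simpl; lra).
 apply lt_IZR in H4. lia. Qed.

Lemma mk_mono_N N : forall x y, 0 <= x -> x <= y -> y <= 1 -> minkowski x - minkowski y <= 2 * (/ 2) ^ N.
Proof. induction N; intros x y Hx Hxy Hy.
 - pose proof (mk_range x ltac:(lra)). pose proof (mk_range y ltac:(lra)). simpl. lra.
 - assert (Hp : 0 < (/ 2) ^ N) by (apply pow_lt; lra).
   destruct (Req_dec x 0) as [E|E]. subst. rewrite mk_0. pose proof (mk_range y ltac:(lra)). simpl. nra.
   assert (Hx0 : 0 < x) by lra.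
   pose proof (mk_bounds x ltac:(lra)) as Bx. pose proof (mk_bounds y ltac:(lra)) as By.
   destruct (digit0_INR x ltac:(lra)) as [Ax Ax1]. destruct (digit0_INR y ltac:(lra)) as [Ay Ay1].
   assert (Hinv : / y <= / x) by (apply Rinv_le_contravar; lra).
   pose proof (Int_part_mono _ _ Hinv) as Hm.
   assert (Hab : (cf_digit y 0 <= cf_digit x 0)%nat) by (apply INR_le; rewrite Ax, Ay; apply IZR_le; auto).
   destruct (Nat.eq_dec (cf_digit x 0) (cf_digit y 0)) as [Eq|Ne].
   + assert (EZ : Int_part (/ x) = Int_part (/ y)) by (apply eq_IZR; rewrite <- Ax, <- Ay, Eq; reflexivity).
     rewrite (mk_rec x), (mk_rec y) by lra. rewrite Eq.
     pose proof (gauss_range x ltac:(lra)). pose proof (gauss_range y ltac:(lra)).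
     assert (gauss_map y <= gauss_map x) by (rewrite !gauss_eq, EZ by lra; lra).
     specialize (IHN (gauss_map y) (gauss_map x) ltac:(lra) ltac:(lra) ltac:(lra)).
     pose proof (half_pow_le 1 _ Ay1). simpl in H2.
     assert (0 < (/ 2) ^ cf_digit y 0) by (apply pow_lt; lra).
     simpl. destruct (Rle_dec 0 (minkowski (gauss_map y) - minkowski (gauss_map x))); nra.
   + assert (S (cf_digit y 0) <= cf_digit x 0)%nat by lia.
     pose proof (half_pow_le _ _ H). simpl in H0. simpl. nra. Qed.

Lemma mk_mono : mono minkowski.
Proof. intros x y Hx Hxy Hy. destruct (Rle_dec (minkowski x) (minkowski y)); auto. exfalso.
 set (d := minkowski x - minkowski y).
 destruct (pow_lt_1_zero (/ 2) ltac:(rewrite Rabs_pos_eq; lra) (d / 2) ltac:(unfold d; lra)) as [N HN].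
 specialize (HN N (le_n N)). rewrite Rabs_pos_eq in HN by (apply pow_le; lra).
 pose proof (mk_mono_N N x y Hx Hxy Hy). fold d in H. lra. Qed.

Lemma Int_part_m1 r : Int_part (r - 1) = (Int_part r - 1)%Z.
Proof. symmetry. apply Int_part_spec. rewrite minus_IZR. destruct (base_Int_part r). simpl. lra. Qed.

Lemma mk_sym_core x : 0 < x < 1/2 -> minkowski (1 - x) = 1 - minkowski x.
Proof. intros Hx. set (y := 1 - x).
 assert (Hy1 : 1 < / y) by (unfold y; rewrite <- Rinv_1; apply Rinv_lt_contravar; lra).
 assert (Hy2 : / y < 2) by (unfold y; replace 2 with (/ / 2) by field; apply Rinv_lt_contravar; lra).
 assert (Iy : Int_part (/ y) = 1%Z) by (symmetry; apply Int_part_spec; simpl; lra).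
 assert (Dy : cf_digit y 0 = 1%nat) by (rewrite digit0_eq by (unfold y; lra); rewrite Iy; reflexivity).
 set (z := gauss_map y).
 assert (Ez : z = x / (1 - x)) by (unfold z; rewrite gauss_eq by (unfold y; lra); rewrite Iy; unfold y; simpl; field; lra).
 assert (Hz : 0 < z <= 1) by (rewrite Ez; split; [apply Rdiv_lt_0_compat; lra|]; apply (Rmult_le_reg_r (1 - x)); [lra|];
   unfold Rdiv; rewrite Rmult_assoc, Rinv_l by lra; lra).
 assert (Eiz : / z = / x - 1) by (rewrite Ez; field; lra).
 set (a := Int_part (/ x)).
 assert (Ha : (2 <= a)%Z).
 { assert (2 < / x) by (replace 2 with (/ / 2) by field; apply Rinv_lt_contravar; lra).
   destruct (base_Int_part (/ x)). assert (1 < a)%Z by (apply lt_IZR; fold a in H0, H1; simpl; lra). lia. }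
 assert (Iz : Int_part (/ z) = (a - 1)%Z) by (rewrite Eiz, Int_part_m1; reflexivity).
 assert (Dx : cf_digit x 0 = Z.to_nat a) by (apply digit0_eq; lra).
 assert (Dz : cf_digit z 0 = (Z.to_nat a - 1)%nat).
 { rewrite digit0_eq by lra. rewrite Iz, Z2Nat.inj_sub by lia. reflexivity. }
 assert (Gz : gauss_map z = gauss_map x).
 { rewrite !gauss_eq by lra. rewrite Iz, Eiz, minus_IZR. fold a. simpl. ring. }
 assert (Mz : minkowski z = 2 * minkowski x).
 { rewrite (mk_rec z Hz), (mk_rec x ltac:(lra)), Dz, Dx, Gz.
   assert (E : Z.to_nat a = S (Z.to_nat a - 1)) by lia. rewrite E at 2. simpl. field. }
 rewrite (mk_rec y) by (unfold y; lra). rewrite Dy. fold z. rewrite Mz. simpl. field. Qed.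

Lemma mk_half : minkowski (1/2) = 1/2.
Proof. rewrite mk_rec by lra. replace (/ (1/2)) with (INR 2) by (simpl; field).
 rewrite digit0_eq by lra. rewrite gauss_eq by lra. replace (/ (1/2)) with (INR 2) by (simpl; field).
 rewrite Int_part_INR. simpl Z.to_nat. rewrite <- INR_IZR_INZ. replace (INR 2 - INR 2) with 0 by ring.
 rewrite mk_0. simpl. field. Qed.

Lemma mk_sym x : 0 <= x <= 1 -> minkowski (1 - x) = 1 - minkowski x.
Proof. intros Hx. destruct (Req_dec x 0). subst. replace (1 - 0) with 1 by ring. rewrite mk_1, mk_0. ring.
 destruct (Req_dec x 1). subst. replace (1 - 1) with 0 by ring. rewrite mk_1, mk_0. ring.
 destruct (Rlt_dec x (1/2)). apply mk_sym_core; lra.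
 destruct (Req_dec x (1/2)). subst. replace (1 - 1/2) with (1/2) by field. rewrite mk_half. field.
 pose proof (mk_sym_core (1 - x) ltac:(lra)). replace (1 - (1 - x)) with x in H2 by ring. lra. Qed.

Lemma mk_end e : 0 < e -> exists eta, 0 < eta <= 1 /\ minkowski eta <= e.
Proof. intros He. destruct (pow_lt_1_zero (/ 2) ltac:(rewrite Rabs_pos_eq; lra) (e / 2) ltac:(lra)) as [N HN].
 specialize (HN N (le_n N)). rewrite Rabs_pos_eq in HN by (apply pow_le; lra).
 set (eta := / INR (N + 2)). assert (HNp : 2 <= INR (N + 2)) by (rewrite plus_INR; simpl; pose proof (pos_INR N); lra).
 exists eta. assert (He0 : 0 < eta <= 1) by (unfold eta; split; [apply Rinv_0_lt_compat; lra|
   rewrite <- Rinv_1; apply Rinv_le_contravar; lra]).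
 split; auto. pose proof (mk_bounds eta He0) as [_ B].
 rewrite digit0_eq in B by lra. unfold eta in B. rewrite Rinv_inv, Int_part_INR, Nat2Z.id in B.
 pose proof (half_pow_le N (N + 2) ltac:(lia)).
 assert ((/ 2) ^ (N + 2) = / 4 * (/ 2) ^ N) by (rewrite pow_add; simpl; field). unfold eta. lra. Qed.

Theorem theorem3 :
  forall k : nat,
  (forall d : nat -> R,
     (forall n : nat,
        is_RS_integral (V := R_NormedModule)
          (fun x => cos (2 * PI * INR n * x)) minkowski 0 1 (d n)) ->
     is_lim_seq d 0) ->
  forall F : R -> C,
    (forall t : R,
       is_RS_integral (V := C_R_NormedModule)
         (fun x => Cmult (Cpow (Cmult Ci (RtoC x)) k) (cis (t * x)))
         minkowski 0 1 (F t)) ->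
    forall eps : posreal, exists T : R,
      forall t : R, T < Rabs t -> Cmod (F t) < eps.
Proof. apply main_generic. apply mk_mono. apply mk_0. apply mk_1. apply mk_sym. apply mk_end. Qed.
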